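(* Let $(\Lambda,d)$ be a finitely aligned $k$-graph. The map $\Psi:S_\Lambda\to{\mathcal G}_\Lambda^{op}$, $\Psi(F)=\{[F,x]:x\in D_F\}$, is an injective $*$-homomorphism of inverse semigroups.
   Context: A $k$-graph $(\Lambda,d)$ is a countable small category $\Lambda$ (objects identified with identity morphisms) with a functor $d:\Lambda\to\mathbb N^k$ satisfying unique factorization: whenever $d(\lambda)=m+n$ there are unique $\mu,\nu$ with $d(\mu)=m$, $d(\nu)=n$, $\lambda=\mu\nu$. $r,s$ range/source. $\Lambda^{\min}(\lambda,\mu)=\{(\alpha,\beta):\lambda\alpha=\mu\beta,\ d(\lambda\alpha)=d(\lambda)\vee d(\mu)\}$; finitely aligned means all are finite. $S_\Lambda$: finite $F\subseteq\{(\lambda,\mu):s(\lambda)=s(\mu)\}$ with distinct $(\lambda,\mu),(\nu,\omega)\in F$ satisfying $\Lambda^{\min}(\lambda,\nu)=\Lambda^{\min}(\mu,\omega)=\emptyset$; inverse semigroup with $FG=\bigcup_{(\lambda,\mu)\in F,(\xi,\eta)\in G}\{(\lambda\alpha,\eta\beta):(\alpha,\beta)\in\Lambda^{\min}(\mu,\xi)\}$, $F^*=\{(\mu,\lambda):(\lambda,\mu)\in F\}$, idempotents $E(S_\Lambda)$. $\Omega_{k,m}$ ($m\in(\mathbb N\cup\{\infty\})^k$): objects $\{p\in\mathbb N^k:p\le m\}$, morphisms $(p,q)$, $p\le q\le m$, $r(p,q)=p$, $s(p,q)=q$, $d(p,q)=q-p$. $X_\Lambda$ = degree-preserving functors $x:\Omega_{k,m}\to\Lambda$,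 $d(x)=m$, $r(x)=x(0,0)$; paths $\lambda$ are regarded as elements of $X_\Lambda$ via $x_\lambda:\Omega_{k,d(\lambda)}\to\Lambda$, $x_\lambda(0,d(\lambda))=\lambda$. $\sigma^m x(p,q)=x(p+m,q+m)$; $\lambda x$ ($s(\lambda)=x(0,0)$) has $(\lambda x)(0,n)=\lambda x(0,n-d(\lambda))$. $D_F=\{x:\exists(\lambda,\mu)\in F,\ x(0,d(\mu))=\mu\}$; $\theta_F(x)=\lambda\sigma^{d(\mu)}x$. $X_\Lambda$ carries the topology with subbasis $\{D_F,X_\Lambda\setminus D_F\}$. ${\mathcal G}_\Lambda$: germs $[F,x]$ of pairs $(F,x)$, $x\in D_F$, under $(F,x)\sim(G,y)$ iff $x=y$ and some $P\in E(S_\Lambda)$ has $x\in D_P$, $FP=GP$; product $[F,\theta_G(x)][G,x]=[FG,x]$, inverse $[F^*,\theta_F(x)]$, $r([F,x])=\theta_F(x)$, $s([F,x])=x$; topology with subbasis $\{\Psi(F),{\mathcal G}_\Lambda\setminus\Psi(F)\}$. For a topological groupoid $G$, $G^{op}$ is the family of open Hausdorff subsets $A\subseteq G$ such that $r|_A$ and $s|_A$ are homeomorphisms onto their images; it is an inverse semigroup under $AB=\{ab:a\in A,b\in B,(a,b)\text{ composable}\}$ and $A^*=A^{-1}$. *)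

(* Defs.v *)
From mathcomp Require Import all_boot.
From Stdlib Require Import List ClassicalEpsilon.

Set Implicit Arguments.
Unset Strict Implicit.
Unset Printing Implicit Defensive.

Definition pset (T : Type) := T -> Prop.
Definition setC (T : Type) (A : pset T) : pset T := fun x => ~ A x.
Definition img (T U : Type) (f : T -> U) (A : pset T) : pset U :=
  fun y => exists a, A a /\ y = f a.

Definition zerov (k : nat) : 'I_k -> nat := fun _ => 0.
Definition addv (k : nat) (p q : 'I_k -> nat) : 'I_k -> nat := fun i => p i + q i.
Definition subv (k : nat) (p q : 'I_k -> nat) : 'I_k -> nat := fun i => p i - q i.
Definition joinv (k : nat) (p q : 'I_k -> nat) : 'I_k -> nat := fun i => maxn (p i) (q i).
Definition lev (k : nat) (p q : 'I_k -> nat) : Prop := forall i, p i <= q i.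
(** Degrees in (N u {oo})^k: [None] stands for [oo]. *)
Definition le_inf (k : nat) (p : 'I_k -> nat) (m : 'I_k -> option nat) : Prop :=
  forall i, match m i with Some n => is_true (p i <= n) | None => True end.

(** A k-graph: a countable small category (objects identified with identity
    morphisms, i.e. the morphisms [o] with [rg o = o]) with a degree functor
    [dg] into N^k satisfying unique factorisation.  [cmp l m] is the
    composite [l m] (only meaningful when [sr l = rg m]). *)
Record kgraph (k : nat) := KGraph {
  Mor : Type;
  rg : Mor -> Mor;
  sr : Mor -> Mor;
  cmp : Mor -> Mor -> Mor;
  dg : Mor -> 'I_k -> nat;
  kg_countable : exists f : Mor -> nat, injective f;
  rg_rg : forall l, rg (rg l) = rg l;
  sr_rg : forall l, sr (rg l) = rg l;
  rg_sr : forall l, rg (sr l) = sr l;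
  sr_sr : forall l, sr (sr l) = sr l;
  rg_cmp : forall l m, sr l = rg m -> rg (cmp l m) = rg l;
  sr_cmp : forall l m, sr l = rg m -> sr (cmp l m) = sr m;
  cmp_id_l : forall l, cmp (rg l) l = l;
  cmp_id_r : forall l, cmp l (sr l) = l;
  cmpA : forall l m n, sr l = rg m -> sr m = rg n ->
           cmp (cmp l m) n = cmp l (cmp m n);
  dg_cmp : forall l m, sr l = rg m -> dg (cmp l m) = addv (dg l) (dg m);
  unique_fact : forall l (m n : 'I_k -> nat), dg l = addv m n ->
    exists! p : Mor * Mor,
      sr p.1 = rg p.2 /\ dg p.1 = m /\ dg p.2 = n /\ l = cmp p.1 p.2
}.

Section KGraph.
Variables (k : nat) (L : kgraph k).

Local Notation M := (Mor L).

Definition Lmin (l m : M) : pset (M * M) := fun a =>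
  sr l = rg a.1 /\ sr m = rg a.2 /\
  cmp l a.1 = cmp m a.2 /\
  dg (cmp l a.1) = joinv (dg l) (dg m).

Definition finitely_aligned : Prop :=
  forall l m : M, exists s : list (M * M), forall a, Lmin l m a <-> In a s.

Definition in_SL (F : pset (M * M)) : Prop :=
  (exists s : list (M * M), forall p, F p -> In p s) /\
  (forall p, F p -> sr p.1 = sr p.2) /\
  (forall p q, F p -> F q -> p <> q ->
     (forall a, ~ Lmin p.1 q.1 a) /\ (forall a, ~ Lmin p.2 q.2 a)).

Definition smul (F G : pset (M * M)) : pset (M * M) := fun c =>
  exists p q a, F p /\ G q /\ Lmin p.2 q.1 a /\
                c = (cmp p.1 a.1, cmp q.2 a.2).

Definition sstar (F : pset (M * M)) : pset (M * M) := fun c => F (c.2, c.1).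

Definition idempotent_SL (P : pset (M * M)) : Prop := in_SL P /\ smul P P = P.

(** The path space X_Lambda: degree-preserving functors
    x : Omega_{k,m} -> Lambda.  [kp_deg x] is m, and [kp_map x p q] is
    [Some (x(p,q))] when p <= q <= m and [None] otherwise. *)
Record kpath := KPath {
  kp_deg : 'I_k -> option nat;
  kp_map : ('I_k -> nat) -> ('I_k -> nat) -> option M;
  kp_dom : forall p q, kp_map p q <> None <-> lev p q /\ le_inf q kp_deg;
  kp_dg : forall p q l, kp_map p q = Some l -> dg l = subv q p;
  kp_rg : forall p q l, kp_map p q = Some l -> kp_map p p = Some (rg l);
  kp_sr : forall p q l, kp_map p q = Some l -> kp_map q q = Some (sr l);
  kp_cmp : forall p q t l m, kp_map p q = Some l -> kp_map q t = Some m ->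
             kp_map p t = Some (cmp l m)
}.

(** sigma^m x, with sigma^m x (p,q) = x(p+m, q+m)  (meaningful for m <= d(x)). *)
Definition shift (m : 'I_k -> nat) (x : kpath) : kpath :=
  epsilon (inhabits x) (fun y =>
    kp_deg y = (fun i => omap (fun n => n - m i) (kp_deg x i)) /\
    forall p q, kp_map y p q = kp_map x (addv p m) (addv q m)).

(** l x, with (l x)(0,n) = l x(0, n - d(l))  (meaningful for s(l) = x(0,0)). *)
Definition concat (l : M) (x : kpath) : kpath :=
  epsilon (inhabits x) (fun y =>
    kp_deg y = (fun i => omap (fun n => dg l i + n) (kp_deg x i)) /\
    forall n, lev (dg l) n -> le_inf n (kp_deg y) ->
      kp_map y (@zerov k) n =
      omap (cmp l) (kp_map x (@zerov k) (subv n (dg l)))).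

Definition DF (F : pset (M * M)) : pset kpath := fun x =>
  exists p, F p /\ kp_map x (@zerov k) (dg p.2) = Some p.2.

(** theta_F(x) = l sigma^{d(m)} x for the (l,m) in F with x(0,d(m)) = m. *)
Definition theta (F : pset (M * M)) (x : kpath) : kpath :=
  epsilon (inhabits x) (fun y =>
    exists p, F p /\ kp_map x (@zerov k) (dg p.2) = Some p.2 /\
              y = concat p.1 (shift (dg p.2) x)).

Definition gen_open (T : Type) (S : pset (pset T)) (U : pset T) : Prop :=
  forall x, U x -> exists l : list (pset T),
    (forall V, In V l -> S V) /\ (forall V, In V l -> V x) /\
    (forall y, (forall V, In V l -> V y) -> U y).

Definition X_open : pset (pset kpath) :=
  gen_open (fun V => exists F, in_SL F /\ (V = DF F \/ V = setC (DF F))).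

Definition valid (F : pset (M * M)) (x : kpath) : Prop := in_SL F /\ DF F x.

Definition germ_equiv (Fx Gy : pset (M * M) * kpath) : Prop :=
  Fx.2 = Gy.2 /\
  exists P, idempotent_SL P /\ DF P Fx.2 /\ smul Fx.1 P = smul Gy.1 P.

Definition germ_class (F : pset (M * M)) (x : kpath) : pset (pset (M * M) * kpath) :=
  fun Gy => valid Gy.1 Gy.2 /\ germ_equiv (F, x) Gy.

Definition germ : Type :=
  { c : pset (pset (M * M) * kpath) | exists F x, valid F x /\ c = germ_class F x }.

Definition is_germ_of (g : germ) (F : pset (M * M)) (x : kpath) : Prop :=
  valid F x /\ proj1_sig g = germ_class F x.

Lemma germ_inh (g : germ) : inhabited kpath.
Proof. destruct g as [c [F [x _]]]; exact (inhabits x). Qed.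

Definition germ_s (g : germ) : kpath :=
  epsilon (germ_inh g) (fun x => exists F, is_germ_of g F x).

Definition germ_r (g : germ) : kpath :=
  epsilon (germ_inh g) (fun y => exists F x, is_germ_of g F x /\ y = theta F x).

(** [F, theta_G(x)] [G, x] = [FG, x]  (for composable germs). *)
Definition germ_mul (a b : germ) : germ :=
  epsilon (inhabits a) (fun c => exists F G x,
    is_germ_of b G x /\ is_germ_of a F (theta G x) /\ is_germ_of c (smul F G) x).

Definition germ_inv (a : germ) : germ :=
  epsilon (inhabits a) (fun c => exists F x,
    is_germ_of a F x /\ is_germ_of c (sstar F) (theta F x)).

Definition Psi (F : pset (M * M)) : pset germ := fun g =>
  exists x, DF F x /\ is_germ_of g F x.

Definition G_open : pset (pset germ) :=
  gen_open (fun V => exists F, in_SL F /\ (V = Psi F \/ V = setC (Psi F))).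

End KGraph.

Definition rel_open (T : Type) (opn : pset (pset T)) (A V : pset T) : Prop :=
  exists U, opn U /\ forall x, V x <-> (U x /\ A x).

Definition hausdorff_in (T : Type) (opn : pset (pset T)) (A : pset T) : Prop :=
  forall a b, A a -> A b -> a <> b ->
    exists U V, opn U /\ opn V /\ U a /\ V b /\
      (forall c, A c -> U c -> V c -> False).

Definition homeo_onto_image (T U : Type) (opT : pset (pset T)) (opU : pset (pset U))
    (A : pset T) (f : T -> U) : Prop :=
  (forall a b, A a -> A b -> f a = f b -> a = b) /\
  (forall W, opU W -> rel_open opT A (fun a => A a /\ W (f a))) /\
  (forall V, (forall a, V a -> A a) -> rel_open opT A V ->
     rel_open opU (img f A) (img f V)).

Section Gop.
Variables (k : nat) (L : kgraph k).

(** G_Lambda^op : open Hausdorff bisections. *)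
Definition in_Gop (A : pset (germ L)) : Prop :=
  @G_open k L A /\ hausdorff_in (@G_open k L) A /\
  homeo_onto_image (@G_open k L) (@X_open k L) A (@germ_r k L) /\
  homeo_onto_image (@G_open k L) (@X_open k L) A (@germ_s k L).

Definition gop_mul (A B : pset (germ L)) : pset (germ L) := fun c =>
  exists a b, A a /\ B b /\ germ_s a = germ_r b /\ c = germ_mul a b.

Definition gop_inv (A : pset (germ L)) : pset (germ L) := fun c =>
  exists a, A a /\ c = germ_inv a.

End Gop.

(* Main.v *)
Require Import Defs.
From mathcomp Require Import all_boot zify.
From Stdlib Require Import List ClassicalEpsilon FunctionalExtensionality PropExtensionality ProofIrrelevance Lia.

Set Implicit Arguments.
Unset Strict Implicit.
Unset Printing Implicit Defensive.

Section S.
Variables (k : nat) (L : kgraph k).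
Local Notation M := (Mor L).
Local Notation V := ('I_k -> nat).

Ltac vext := apply functional_extensionality; intro.

Lemma addv_inj_r (m n n' : V) : addv m n = addv m n' -> n = n'.
Proof. intro H. vext. have := f_equal (fun f => f x) H. unfold addv. lia. Qed.
Lemma addv_inj_l (m m' n : V) : addv m n = addv m' n -> m = m'.
Proof. intro H. vext. have := f_equal (fun f => f x) H. unfold addv. lia. Qed.

Lemma dg_rg (l : M) : dg (rg l) = (@zerov k).
Proof.
  have H := dg_cmp (sr_rg l). rewrite cmp_id_l in H.
  vext. have := f_equal (fun f => f x) H. unfold addv, zerov. lia.
Qed.
Lemma dg_sr (l : M) : dg (sr l) = (@zerov k).
Proof.
  have H := dg_cmp (esym (rg_sr l)). rewrite cmp_id_r in H.
  vext. have := f_equal (fun f => f x) H. unfold addv, zerov. lia.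
Qed.

Lemma vertex (l : M) : dg l = (@zerov k) -> rg l = l.
Proof.
  intro H0.
  have E : dg l = addv ((@zerov k)) ((@zerov k)) by rewrite H0; vext; reflexivity.
  destruct (unique_fact E) as [[a b] [Hab U]].
  have U1 := U (rg l, l). have U2 := U (l, sr l).
  simpl in *.
  have E1 := U1 (conj (sr_rg l) (conj (dg_rg l) (conj H0 (esym (cmp_id_l l))))).
  have E2 := U2 (conj (esym (rg_sr l)) (conj H0 (conj (dg_sr l) (esym (cmp_id_r l))))).
  rewrite E1 in E2. injection E2. intros; congruence.
Qed.

Lemma vertex_sr (l : M) : dg l = (@zerov k) -> sr l = l.
Proof. intro H. rewrite -{1}(vertex H) sr_rg. apply vertex; exact H. Qed.

Lemma uf (u v u' v' : M) : sr u = rg v -> sr u' = rg v' -> dg u = dg u' ->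
  cmp u v = cmp u' v' -> u = u' /\ v = v'.
Proof.
  intros H1 H2 Hd He.
  have Ed := dg_cmp H1. have Ed' := dg_cmp H2.
  have Hv : dg v = dg v'.
  { apply (@addv_inj_r (dg u)). rewrite <- Ed, He, Ed', Hd. reflexivity. }
  destruct (unique_fact Ed) as [[a b] [_ U]].
  have A1 := U (u, v) (conj H1 (conj erefl (conj erefl erefl))).
  have A2 := U (u', v') (conj H2 (conj (esym Hd) (conj (esym Hv) He))).
  rewrite A1 in A2. injection A2. auto.
Qed.

Lemma uf_r (u v u' v' : M) : sr u = rg v -> sr u' = rg v' -> dg v = dg v' ->
  cmp u v = cmp u' v' -> u = u' /\ v = v'.
Proof.
  intros H1 H2 Hd He. apply uf; auto.
  have Ed := dg_cmp H1. have Ed' := dg_cmp H2.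
  apply (@addv_inj_l _ _ (dg v)). rewrite <- Ed, He, Ed', Hd. reflexivity.
Qed.

Lemma lcancel (u v v' : M) : sr u = rg v -> sr u = rg v' -> cmp u v = cmp u v' -> v = v'.
Proof. intros H1 H2 He. exact (proj2 (uf H1 H2 erefl He)). Qed.

Lemma fact (w : M) (m : V) : lev m (dg w) ->
  exists u v, sr u = rg v /\ dg u = m /\ dg v = subv (dg w) m /\ w = cmp u v.
Proof.
  intro H.
  have E : dg w = addv m (subv (dg w) m).
  { vext. unfold addv, subv. have := H x. lia. }
  destruct (unique_fact E) as [[a b] [[? [? [? ?]]] _]].
  exists a, b. simpl in *. tauto.
Qed.

Lemma lev_dg_cmp (u v : M) : sr u = rg v -> lev (dg u) (dg (cmp u v)).
Proof. intros H i. rewrite (dg_cmp H). unfold addv. lia. Qed.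

Lemma Lmin_ne (a b u v : M) : sr a = rg u -> sr b = rg v -> cmp a u = cmp b v ->
  exists c, Lmin a b c.
Proof.
  intros Hu Hv He.
  set w := cmp a u.
  have Ha : lev (dg a) (dg w) by apply lev_dg_cmp.
  have Hb : lev (dg b) (dg w) by unfold w; rewrite He; apply lev_dg_cmp.
  set J := joinv (dg a) (dg b).
  have HJa : lev (subv J (dg a)) (dg u).
  { intro i. have := Ha i. have := Hb i. rewrite /w (dg_cmp Hu). unfold J, joinv, subv, addv. lia. }
  have HJb : lev (subv J (dg b)) (dg v).
  { intro i. have := Ha i. have := Hb i. rewrite /w He (dg_cmp Hv). unfold J, joinv, subv, addv. lia. }
  destruct (fact HJa) as [u1 [u2 [Hu12 [Hdu1 [_ Eu]]]]].
  destruct (fact HJb) as [v1 [v2 [Hv12 [Hdv1 [_ Ev]]]]].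
  have Hru1 : rg u1 = rg u by rewrite Eu rg_cmp.
  have Hrv1 : rg v1 = rg v by rewrite Ev rg_cmp.
  have E1 : cmp (cmp a u1) u2 = cmp (cmp b v1) v2.
  { rewrite cmpA; [| congruence | exact Hu12]. rewrite cmpA; [| congruence | exact Hv12].
    rewrite <- Eu, <- Ev. exact He. }
  have Da : dg (cmp a u1) = J.
  { rewrite dg_cmp; [| congruence]. rewrite Hdu1. vext. unfold addv, subv, J, joinv. lia. }
  have Db : dg (cmp b v1) = J.
  { rewrite dg_cmp; [| congruence]. rewrite Hdv1. vext. unfold addv, subv, J, joinv. lia. }
  destruct (uf (u:=cmp a u1) (v:=u2) (u':=cmp b v1) (v':=v2)) as [Ee _].
  - rewrite sr_cmp; [exact Hu12| congruence].
  - rewrite sr_cmp; [exact Hv12| congruence].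
  - congruence.
  - exact E1.
  - exists (u1, v1). unfold Lmin; simpl. split; [congruence|]. split; [congruence|].
    split; [exact Ee| exact Da].
Qed.

Lemma Lmin_comp (a b : M) (c : M * M) : Lmin a b c -> cmp a c.1 = cmp b c.2 /\ sr a = rg c.1 /\ sr b = rg c.2.
Proof. unfold Lmin; tauto. Qed.

Lemma Lmin_dg (a b : M) (c : M * M) : Lmin a b c ->
  dg c.1 = subv (joinv (dg a) (dg b)) (dg a) /\ dg c.2 = subv (joinv (dg a) (dg b)) (dg b).
Proof.
  intros [H1 [H2 [H3 H4]]].
  have E1 := dg_cmp H1. have E2 := dg_cmp H2. rewrite H3 in H4.
  split; vext.
  - have := f_equal (fun f => f x) E1. have := f_equal (fun f => f x) H4.
    rewrite -H3. unfold addv, subv, joinv. lia.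
  - have := f_equal (fun f => f x) E2. have := f_equal (fun f => f x) H4.
    unfold addv, subv, joinv. lia.
Qed.

Lemma Lmin_ext (m a : M) (c : M * M) : sr m = rg a -> (Lmin m (cmp m a) c <-> c = (a, sr a)).
Proof.
  intro H. split.
  - intros HL. destruct c as [c1 c2].
    destruct (Lmin_dg HL) as [D1 D2]. destruct HL as [H1 [H2 [H3 H4]]]. simpl in *.
    have J : joinv (dg m) (dg (cmp m a)) = dg (cmp m a).
    { rewrite dg_cmp; auto. vext. unfold joinv, addv. lia. }
    rewrite J in D2.
    have Z : dg c2 = (@zerov k) by rewrite D2; vext; unfold subv, zerov; lia.
    have Vc2 : c2 = sr a.
    { rewrite <- (vertex Z). rewrite <- H2. rewrite sr_cmp; auto. }
    subst c2. rewrite -(sr_cmp H) cmp_id_r in H3.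
    have := lcancel H1 H H3. intro; subst. reflexivity.
  - intro; subst c. unfold Lmin; simpl. rewrite sr_cmp; auto.
    split; auto. split; [symmetry; apply rg_sr|]. split; [rewrite -(sr_cmp H) cmp_id_r; reflexivity|].
    rewrite dg_cmp; auto. vext. unfold joinv, addv. lia.
Qed.


(** ** Paths *)
Local Notation Z := (@zerov k).
Local Notation kp := (kpath L).

Lemma kpath_ext (x y : kp) : kp_deg x = kp_deg y -> kp_map x = kp_map y -> x = y.
Proof.
  destruct x, y; simpl; intros; subst. f_equal; apply proof_irrelevance.
Qed.

Lemma defined (x : kp) p q : lev p q -> le_inf q (kp_deg x) -> exists l, kp_map x p q = Some l.
Proof.
  intros H1 H2. destruct (kp_map x p q) eqn:E; [eauto|].
  exfalso. apply (proj2 (kp_dom x p q) (conj H1 H2)). exact E.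
Qed.

Lemma dom_of (x : kp) p q l : kp_map x p q = Some l -> lev p q /\ le_inf q (kp_deg x).
Proof. intro E. apply (kp_dom x p q). rewrite E. discriminate. Qed.

Lemma le_inf_mono (p q : V) d : lev p q -> le_inf q d -> le_inf p d.
Proof. intros H1 H2 i. have := H2 i. have := H1 i. destruct (d i); auto. intros; lia. Qed.

Lemma le_inf_join (p q : V) d : le_inf p d -> le_inf q d -> le_inf (joinv p q) d.
Proof. intros H1 H2 i. have := H2 i. have := H1 i. unfold joinv. destruct (d i); auto. intros; lia. Qed.

Lemma lev_refl (p : V) : lev p p.
Proof. intro i. lia. Qed.
Lemma lev_trans (p q r : V) : lev p q -> lev q r -> lev p r.
Proof. intros H1 H2 i. have := H1 i. have := H2 i. lia. Qed.
Lemma lev0 (p : V) : lev Z p.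
Proof. intro i. unfold zerov. lia. Qed.

Lemma comp_sr (x : kp) p q t l m : kp_map x p q = Some l -> kp_map x q t = Some m -> sr l = rg m.
Proof.
  intros H1 H2. have A := kp_sr H1. have B := kp_rg H2. rewrite A in B. injection B; auto.
Qed.

Lemma dg0 (x : kp) n l : kp_map x Z n = Some l -> dg l = n.
Proof. intro H. rewrite (kp_dg H). vext. unfold subv, zerov. lia. Qed.

Lemma PC (x : kp) N u v : kp_map x Z N = Some (cmp u v) -> sr u = rg v ->
  kp_map x Z (dg u) = Some u /\ kp_map x (dg u) N = Some v.
Proof.
  intros H Huv.
  have HN := dg0 H. rewrite dg_cmp in HN; auto.
  destruct (dom_of H) as [_ Hi].
  have Hl : lev (dg u) N by rewrite <- HN; intro i; unfold addv; lia.
  destruct (defined (x:=x) (lev0 (dg u)) (le_inf_mono Hl Hi)) as [a Ha].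
  destruct (defined (x:=x) Hl Hi) as [b Hb].
  have Hc := kp_cmp Ha Hb. rewrite H in Hc. injection Hc; intro Hc'.
  have Hda := dg0 Ha.
  destruct (uf (comp_sr Ha Hb) Huv Hda (esym Hc')) as [-> ->]. auto.
Qed.

Lemma seg_of (x : kp) n N a v : kp_map x Z n = Some a -> kp_map x Z N = Some (cmp a v) -> sr a = rg v ->
  kp_map x n N = Some v.
Proof. intros Ha H Hav. have := proj2 (PC H Hav). rewrite (dg0 Ha). auto. Qed.

Lemma pre2 (x : kp) m n a b : kp_map x Z m = Some a -> kp_map x Z n = Some b ->
  exists c, Lmin a b c /\ kp_map x Z (joinv m n) = Some (cmp a c.1).
Proof.
  intros Ha Hb.
  destruct (dom_of Ha) as [_ Ia]. destruct (dom_of Hb) as [_ Ib].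
  have IJ := le_inf_join Ia Ib.
  have Lm : lev m (joinv m n) by intro i; unfold joinv; lia.
  have Ln : lev n (joinv m n) by intro i; unfold joinv; lia.
  destruct (defined Lm IJ) as [u Hu]. destruct (defined Ln IJ) as [v Hv].
  have E1 := kp_cmp Ha Hu. have E2 := kp_cmp Hb Hv.
  exists (u, v). simpl. split; [|exact E1].
  rewrite E1 in E2. injection E2; intro E.
  split; [exact (comp_sr Ha Hu)|]. split; [exact (comp_sr Hb Hv)|]. split; [exact E|].
  rewrite (dg0 E1) (dg0 Ha) (dg0 Hb). reflexivity.
Qed.

Lemma path_eq_from (x y : kp) d0 : kp_deg x = kp_deg y -> le_inf d0 (kp_deg x) ->
  (forall n, lev d0 n -> le_inf n (kp_deg x) -> kp_map x Z n = kp_map y Z n) -> x = y.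
Proof.
  intros Hd H0 H. apply kpath_ext; auto.
  vext. rename x0 into p. vext. rename x0 into q.
  destruct (classic (lev p q /\ le_inf q (kp_deg x))) as [[Hpq Hq] | Hn].
  - set N := joinv q d0.
    have HqN : lev q N by intro i; unfold N, joinv; lia.
    have H0N : lev d0 N by intro i; unfold N, joinv; lia.
    have IN : le_inf N (kp_deg x) by apply le_inf_join.
    have IN' : le_inf N (kp_deg y) by rewrite <- Hd.
    have Hq' : le_inf q (kp_deg y) by rewrite <- Hd.
    destruct (defined (x:=x) (lev0 p) (le_inf_mono Hpq Hq)) as [a Ha].
    destruct (defined (x:=x) Hpq Hq) as [b Hb].
    destruct (defined (x:=x) HqN IN) as [c Hc].
    destruct (defined (x:=y) (lev0 p) (le_inf_mono Hpq Hq')) as [a' Ha'].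
    destruct (defined (x:=y) Hpq Hq') as [b' Hb'].
    destruct (defined (x:=y) HqN IN') as [c' Hc'].
    have E1 := kp_cmp Ha Hb. have E2 := kp_cmp E1 Hc.
    have E1' := kp_cmp Ha' Hb'. have E2' := kp_cmp E1' Hc'.
    have := H N H0N IN. rewrite E2 E2'. intro E; injection E; intro E0.
    destruct (uf (comp_sr E1 Hc) (comp_sr E1' Hc') (etrans (dg0 E1) (esym (dg0 E1'))) E0) as [E3 _].
    destruct (uf (comp_sr Ha Hb) (comp_sr Ha' Hb') (etrans (dg0 Ha) (esym (dg0 Ha'))) E3) as [_ E4].
    rewrite Hb Hb' E4. reflexivity.
  - have Hn' : ~ (lev p q /\ le_inf q (kp_deg y)) by rewrite <- Hd.
    destruct (kp_map x p q) eqn:E1.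
    + exfalso. apply Hn. apply (dom_of E1).
    + destruct (kp_map y p q) eqn:E2; auto.
      exfalso. apply Hn'. apply (dom_of E2).
Qed.

Definition fac (w : M) (n : V) : M * M :=
  epsilon (inhabits (w, w)) (fun p => sr p.1 = rg p.2 /\ dg p.1 = n /\ w = cmp p.1 p.2).
Definition pre w n := (fac w n).1.
Definition suf w n := (fac w n).2.

Lemma fac_spec w n : lev n (dg w) -> sr (pre w n) = rg (suf w n) /\ dg (pre w n) = n /\ w = cmp (pre w n) (suf w n).
Proof.
  intro H. unfold pre, suf, fac. apply epsilon_spec.
  destruct (fact H) as [u [v [? [? [? ?]]]]]. exists (u, v); simpl; auto.
Qed.

Lemma fac_uniq w n u v : sr u = rg v -> dg u = n -> w = cmp u v -> pre w n = u /\ suf w n = v.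
Proof.
  intros H1 H2 H3.
  have Hl : lev n (dg w) by rewrite H3 -H2; apply lev_dg_cmp.
  destruct (fac_spec Hl) as [A [B C]].
  apply uf; auto. congruence. congruence.
Qed.

Lemma suf_dg w n : lev n (dg w) -> dg (suf w n) = subv (dg w) n.
Proof.
  intro H. destruct (fac_spec H) as [A [B C]].
  have E := dg_cmp A. rewrite <- C in E. rewrite E B. vext. unfold subv, addv. lia.
Qed.

Lemma fac_full w : pre w (dg w) = w /\ suf w (dg w) = sr w.
Proof. apply fac_uniq; auto. symmetry; apply rg_sr. symmetry; apply cmp_id_r. Qed.

Lemma fac_zero w : pre w Z = rg w /\ suf w Z = w.
Proof. apply fac_uniq; auto. apply sr_rg. apply dg_rg. symmetry; apply cmp_id_l. Qed.

Lemma pre_pre w n n' : lev n n' -> lev n' (dg w) -> pre (pre w n') n = pre w n.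
Proof.
  intros H1 H2.
  destruct (fac_spec H2) as [A [B C]].
  have H1' : lev n (dg (pre w n')) by rewrite B.
  destruct (fac_spec H1') as [A' [B' C']].
  set u := pre (pre w n') n. set s1 := suf (pre w n') n. set s2 := suf w n'.
  fold u s1 in A', B', C'. fold s2 in A, C.
  have Hs1 : sr s1 = sr (pre w n') by rewrite C' sr_cmp.
  have E : w = cmp u (cmp s1 s2) by rewrite -cmpA; [rewrite -C'; exact C| exact A' | congruence].
  have R : sr u = rg (cmp s1 s2) by rewrite rg_cmp; [exact A'| congruence].
  symmetry. exact (proj1 (fac_uniq R B' E)).
Qed.

Lemma pre_cmp w z n : lev n (dg w) -> sr w = rg z -> pre (cmp w z) n = pre w n.
Proof.
  intros H Hz. destruct (fac_spec H) as [A [B C]].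
  set u := pre w n. set s1 := suf w n. fold u s1 in A, B, C.
  have Hs1 : sr s1 = sr w by rewrite C (sr_cmp A).
  have E : cmp w z = cmp u (cmp s1 z) by rewrite -cmpA; [rewrite -C; reflexivity| exact A | congruence].
  have R : sr u = rg (cmp s1 z) by rewrite rg_cmp; [exact A| congruence].
  exact (proj1 (fac_uniq R B E)).
Qed.


Lemma suf_full w : suf w (dg w) = sr w.
Proof. exact (proj2 (fac_full w)). Qed.
Lemma pre_full w : pre w (dg w) = w.
Proof. exact (proj1 (fac_full w)). Qed.

Section MK.
Variables (D : 'I_k -> option nat) (W : V -> M).
Hypothesis HW1 : forall n, le_inf n D -> dg (W n) = n.
Hypothesis HW2 : forall n n', lev n n' -> le_inf n' D -> pre (W n') n = W n.

Definition mkmap (p q : V) : option M :=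
  match excluded_middle_informative (lev p q /\ le_inf q D) with
  | left _ => Some (suf (W q) p) | right _ => None end.

Lemma mk_some p q l : mkmap p q = Some l -> lev p q /\ le_inf q D /\ l = suf (W q) p.
Proof.
  unfold mkmap. destruct (excluded_middle_informative _) as [[? ?]|]; [|discriminate].
  intro E; injection E; auto.
Qed.

Lemma mk_val p q : lev p q -> le_inf q D -> mkmap p q = Some (suf (W q) p).
Proof.
  intros H1 H2. unfold mkmap. destruct (excluded_middle_informative _) as [|n]; auto.
  exfalso; auto.
Qed.

Lemma mk_dom p q : mkmap p q <> None <-> lev p q /\ le_inf q D.
Proof.
  unfold mkmap. destruct (excluded_middle_informative _); split; auto; try discriminate.
  intro H; exfalso; auto.
Qed.

Lemma sufW p q : lev p q -> le_inf q D -> dg (suf (W q) p) = subv q p /\ rg (suf (W q) p) = sr (W p)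
  /\ sr (suf (W q) p) = sr (W q).
Proof.
  intros H1 H2.
  have Hd := HW1 H2. have H1' : lev p (dg (W q)) by rewrite Hd.
  destruct (fac_spec H1') as [A [B C]].
  split; [rewrite suf_dg; auto; rewrite Hd; auto|].
  split; [rewrite -A HW2; auto|].
  rewrite {2}C sr_cmp; auto.
Qed.

Lemma mk_dg p q l : mkmap p q = Some l -> dg l = subv q p.
Proof. intro H. destruct (mk_some H) as [H1 [H2 ->]]. exact (proj1 (sufW H1 H2)). Qed.

Lemma sufWW p : le_inf p D -> suf (W p) p = sr (W p).
Proof. intro H. have := suf_full (W p). rewrite HW1; auto. Qed.

Lemma mk_rg p q l : mkmap p q = Some l -> mkmap p p = Some (rg l).
Proof.
  intro H. destruct (mk_some H) as [H1 [H2 ->]].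
  have Hp := le_inf_mono H1 H2.
  rewrite mk_val; [|apply lev_refl| exact Hp]. rewrite sufWW; auto.
  rewrite (proj1 (proj2 (sufW H1 H2))). reflexivity.
Qed.

Lemma mk_sr p q l : mkmap p q = Some l -> mkmap q q = Some (sr l).
Proof.
  intro H. destruct (mk_some H) as [H1 [H2 ->]].
  rewrite mk_val; [|apply lev_refl| exact H2]. rewrite sufWW; auto.
  rewrite (proj2 (proj2 (sufW H1 H2))). reflexivity.
Qed.

Lemma mk_cmp p q t l m : mkmap p q = Some l -> mkmap q t = Some m -> mkmap p t = Some (cmp l m).
Proof.
  intros E1 E2. destruct (mk_some E1) as [H1 [H2 ->]]. destruct (mk_some E2) as [H3 [H4 ->]].
  have H13 := lev_trans H1 H3.
  rewrite mk_val; auto. f_equal.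
  have Hdt := HW1 H4. have Hdq := HW1 H2.
  have Lq : lev q (dg (W t)) by rewrite Hdt.
  destruct (fac_spec Lq) as [A [B C]]. rewrite HW2 in A B C; auto.
  have Lp : lev p (dg (W q)) by rewrite Hdq.
  destruct (fac_spec Lp) as [A' [B' C']]. rewrite HW2 in A' B' C'; auto; try exact (le_inf_mono H1 H2).
  have Hs : sr (suf (W q) p) = sr (W q) by rewrite {2}C' (sr_cmp A').
  have E : W t = cmp (W p) (cmp (suf (W q) p) (suf (W t) q)).
  { rewrite -cmpA; [|exact A'| congruence]. rewrite -C'. exact C. }
  have R : sr (W p) = rg (cmp (suf (W q) p) (suf (W t) q)) by rewrite rg_cmp; [exact A'| congruence].
  have Dp : dg (W p) = p by apply HW1; exact (le_inf_mono H13 H4).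
  exact (proj2 (fac_uniq R Dp E)).
Qed.

Definition mk_path : kp := @KPath k L D mkmap mk_dom mk_dg mk_rg mk_sr mk_cmp.

Lemma mk_path_val n : le_inf n D -> kp_map mk_path Z n = Some (W n).
Proof. intro H. simpl. rewrite (mk_val (lev0 n) H) (proj2 (fac_zero _)). reflexivity. Qed.

End MK.

(** the finite path of a morphism *)
Lemma xp_W1 (m : M) n : le_inf n (fun i => Some (dg m i)) -> dg (pre m n) = n.
Proof. intro H. apply (proj1 (proj2 (fac_spec (w:=m) (n:=n) H))). Qed.
Lemma xp_W2 (m : M) n n' : lev n n' -> le_inf n' (fun i => Some (dg m i)) -> pre (pre m n') n = pre m n.
Proof. intros H1 H2. apply pre_pre; auto. Qed.

Definition xp (m : M) : kp := mk_path (@xp_W1 m) (@xp_W2 m).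

Lemma xp_deg m : kp_deg (xp m) = fun i => Some (dg m i).
Proof. reflexivity. Qed.
Lemma xp_val m : kp_map (xp m) Z (dg m) = Some m.
Proof. unfold xp. rewrite mk_path_val. rewrite pre_full; auto. intro i; simpl; lia. Qed.

Section SH.
Variables (x : kp) (m : V).
Hypothesis Hm : le_inf m (kp_deg x).
Definition shdeg := fun i => omap (fun n => n - m i) (kp_deg x i).
Definition shmap p q := kp_map x (addv p m) (addv q m).
Lemma sh_dom p q : shmap p q <> None <-> lev p q /\ le_inf q shdeg.
Proof.
  unfold shmap. rewrite kp_dom. split.
  - intros [H1 H2]. split.
    + intro i. have := H1 i. unfold addv. lia.
    + intro i. have := H2 i. unfold shdeg, addv. destruct (kp_deg x i); simpl; auto. lia.
  - intros [H1 H2]. split.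
    + intro i. have := H1 i. unfold addv. lia.
    + intro i. have := H2 i. have := Hm i. unfold shdeg, addv. destruct (kp_deg x i); simpl; auto. lia.
Qed.
Lemma sh_dg p q l : shmap p q = Some l -> dg l = subv q p.
Proof. intro H. rewrite (kp_dg H). vext. unfold subv, addv. lia. Qed.
Lemma sh_rg p q l : shmap p q = Some l -> shmap p p = Some (rg l).
Proof. apply kp_rg. Qed.
Lemma sh_sr p q l : shmap p q = Some l -> shmap q q = Some (sr l).
Proof. apply kp_sr. Qed.
Lemma sh_cmp p q t l l' : shmap p q = Some l -> shmap q t = Some l' -> shmap p t = Some (cmp l l').
Proof. apply kp_cmp. Qed.
Definition shp : kp := @KPath k L shdeg shmap sh_dom sh_dg sh_rg sh_sr sh_cmp.
End SH.

Lemma shift_spec (x : kp) m : le_inf m (kp_deg x) ->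
  kp_deg (shift m x) = (fun i => omap (fun n => n - m i) (kp_deg x i)) /\
  forall p q, kp_map (shift m x) p q = kp_map x (addv p m) (addv q m).
Proof.
  intro H. unfold shift. apply epsilon_spec. exists (shp H). simpl. split; reflexivity.
Qed.


Section CC.
Variables (l : M) (x : kp).
Hypothesis Hl : kp_map x Z Z = Some (sr l).
Definition cdeg := fun i => omap (fun n => dg l i + n) (kp_deg x i).
Definition xo t := match kp_map x Z t with Some a => a | None => l end.
Definition cW n := pre (cmp l (xo (subv (joinv n (dg l)) (dg l)))) n.

Lemma xo_spec t : le_inf t (kp_deg x) -> kp_map x Z t = Some (xo t) /\ dg (xo t) = t /\ rg (xo t) = sr l.
Proof.
  intro H. destruct (defined (x:=x) (lev0 t) H) as [a Ha].
  unfold xo. rewrite Ha. split; auto. split; [exact (dg0 Ha)|].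
  have := kp_rg Ha. rewrite Hl. intro E; injection E; auto.
Qed.

Lemma cdeg_inf n : le_inf n cdeg -> le_inf (subv (joinv n (dg l)) (dg l)) (kp_deg x).
Proof. intros H i. have := H i. unfold cdeg, subv, joinv. destruct (kp_deg x i); simpl; auto. lia. Qed.

Lemma cW1 n : le_inf n cdeg -> dg (cW n) = n.
Proof.
  intro H. destruct (xo_spec (cdeg_inf H)) as [A [B C]].
  unfold cW.
  have Lw : lev n (dg (cmp l (xo (subv (joinv n (dg l)) (dg l))))).
  { rewrite dg_cmp; [|auto]. rewrite B. intro i. unfold addv, subv, joinv. lia. }
  exact (proj1 (proj2 (fac_spec Lw))).
Qed.

Lemma cW2 n n' : lev n n' -> le_inf n' cdeg -> cW n' = cW n \/ True -> pre (cW n') n = cW n.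
Proof.
  intros H1 H2 _.
  have H2' := le_inf_mono H1 H2.
  destruct (xo_spec (cdeg_inf H2)) as [A [B C]].
  destruct (xo_spec (cdeg_inf H2')) as [A' [B' C']].
  set t := subv (joinv n (dg l)) (dg l). set t' := subv (joinv n' (dg l)) (dg l).
  have Htt : lev t t' by intro i; have := H1 i; unfold t, t', subv, joinv; lia.
  destruct (defined (x:=x) Htt (cdeg_inf H2)) as [b Hb].
  have E := kp_cmp A' Hb. rewrite A in E. injection E; intro E'.
  unfold cW. fold t t'.
  rewrite pre_pre; auto.
  2:{ rewrite dg_cmp; [|auto]. rewrite B. intro i. unfold t', addv, subv, joinv. lia. }
  rewrite E' -cmpA; [| auto | exact (comp_sr A' Hb)].
  apply pre_cmp.
  - rewrite dg_cmp; [|auto]. rewrite B'. intro i. unfold t, addv, subv, joinv. lia.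
  - rewrite sr_cmp; [exact (comp_sr A' Hb)| auto].
Qed.

Lemma cW2' n n' : lev n n' -> le_inf n' cdeg -> pre (cW n') n = cW n.
Proof. intros; apply cW2; auto. Qed.

Definition cpath : kp := mk_path cW1 cW2'.

End CC.

Lemma concat_spec l (x : kp) : kp_map x Z Z = Some (sr l) ->
  kp_deg (Defs.concat l x) = (fun i => omap (fun n => dg l i + n) (kp_deg x i)) /\
  forall n, lev (dg l) n -> le_inf n (kp_deg (Defs.concat l x)) ->
      kp_map (Defs.concat l x) Z n = omap (cmp l) (kp_map x Z (subv n (dg l))).
Proof.
  intro Hl. unfold Defs.concat. apply epsilon_spec. exists (cpath Hl). split; [reflexivity|].
  intros n H1 H2. unfold cpath. rewrite mk_path_val; auto.
  have J : joinv n (dg l) = n by vext; unfold joinv; have := H1 x0; lia.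
  destruct (xo_spec Hl (cdeg_inf (l:=l) (x:=x) (n:=n) H2)) as [A [B C]].
  unfold cW. rewrite J in A B C |- *. rewrite A. simpl. f_equal.
  have : dg (cmp l (xo l x (subv n (dg l)))) = n.
  { rewrite dg_cmp; auto. rewrite B. vext. unfold addv, subv. have := H1 x0. lia. }
  intro D. have := pre_full (cmp l (xo l x (subv n (dg l)))). rewrite D. auto.
Qed.

Lemma SL_eq1 (F : pset (M * M)) p q c : in_SL F -> F p -> F q -> Lmin p.1 q.1 c -> p = q.
Proof.
  intros [_ [_ H]] Fp Fq Hc. destruct (classic (p = q)) as [|n]; auto.
  exfalso. exact (proj1 (H p q Fp Fq n) c Hc).
Qed.
Lemma SL_eq2 (F : pset (M * M)) p q c : in_SL F -> F p -> F q -> Lmin p.2 q.2 c -> p = q.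
Proof.
  intros [_ [_ H]] Fp Fq Hc. destruct (classic (p = q)) as [|n]; auto.
  exfalso. exact (proj2 (H p q Fp Fq n) c Hc).
Qed.
Lemma SL_sr (F : pset (M * M)) p : in_SL F -> F p -> sr p.1 = sr p.2.
Proof. intros [_ [H _]] Fp. auto. Qed.

Lemma sel_uniq (F : pset (M * M)) (x : kp) p q : in_SL F -> F p -> F q ->
  kp_map x Z (dg p.2) = Some p.2 -> kp_map x Z (dg q.2) = Some q.2 -> p = q.
Proof.
  intros HF Fp Fq Hp Hq. destruct (pre2 Hp Hq) as [c [Hc _]]. exact (SL_eq2 HF Fp Fq Hc).
Qed.

Definition TH (l m : M) (x y : kp) : Prop :=
  kp_deg y = (fun i => omap (fun n => dg l i + (n - dg m i)) (kp_deg x i)) /\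
  forall t, le_inf (addv (dg m) t) (kp_deg x) ->
    kp_map y Z (addv (dg l) t) = omap (cmp l) (kp_map x (dg m) (addv (dg m) t)).

Lemma TH_concat l m (x : kp) : kp_map x Z (dg m) = Some m -> sr l = sr m ->
  TH l m x (Defs.concat l (shift (dg m) x)).
Proof.
  intros Hm Hlm.
  have Im := proj2 (dom_of Hm).
  destruct (shift_spec Im) as [D1 D2].
  have H0 : kp_map (shift (dg m) x) Z Z = Some (sr l).
  { rewrite D2. have -> : addv Z (dg m) = dg m by vext; unfold addv, zerov; lia.
    rewrite Hlm. exact (kp_sr Hm). }
  destruct (concat_spec H0) as [C1 C2].
  split.
  - rewrite C1 D1. vext. destruct (kp_deg x x0); reflexivity.
  - intros t Ht. rewrite C2.
    + rewrite D2.
      have -> : addv Z (dg m) = dg m by vext; unfold addv, zerov; lia.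
      have -> : addv (subv (addv (dg l) t) (dg l)) (dg m) = addv (dg m) t by vext; unfold addv, subv; lia.
      reflexivity.
    + intro i. unfold addv. lia.
    + rewrite C1 D1. intro i. have := Ht i. have := Im i. unfold addv.
      destruct (kp_deg x i); simpl; auto. lia.
Qed.

Lemma theta_TH (F : pset (M * M)) (x : kp) p : in_SL F -> F p -> kp_map x Z (dg p.2) = Some p.2 ->
  TH p.1 p.2 x (theta F x).
Proof.
  intros HF Fp Hx.
  have E : exists q, F q /\ kp_map x Z (dg q.2) = Some q.2 /\ theta F x = Defs.concat q.1 (shift (dg q.2) x).
  { unfold theta. apply (epsilon_spec (inhabits x) (fun y => exists q, F q /\ kp_map x Z (dg q.2) = Some q.2 /\
      y = Defs.concat q.1 (shift (dg q.2) x))). exists (Defs.concat p.1 (shift (dg p.2) x)), p. auto. }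
  destruct E as [q [Fq [Hq ->]]].
  have <- := sel_uniq HF Fp Fq Hx Hq.
  apply TH_concat; auto. exact (SL_sr HF Fp).
Qed.

Lemma TH_uniq l m (x y1 y2 : kp) : kp_map x Z (dg m) = Some m -> TH l m x y1 -> TH l m x y2 -> y1 = y2.
Proof.
  intros Hm [D1 V1] [D2 V2].
  have Im := proj2 (dom_of Hm).
  apply (path_eq_from (d0 := dg l)).
  - congruence.
  - rewrite D1. intro i. have := Im i. destruct (kp_deg x i); simpl; auto. lia.
  - intros n Hn In.
    have E : n = addv (dg l) (subv n (dg l)) by vext; unfold addv, subv; have := Hn x0; lia.
    have It : le_inf (addv (dg m) (subv n (dg l))) (kp_deg x).
    { intro i. have := In i. rewrite D1. unfold addv, subv. have := Im i. have := Hn i.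
      destruct (kp_deg x i); simpl; auto. lia. }
    rewrite E V1 // V2 //.
Qed.

Lemma TH_deg_inf l m (x y : kp) t : TH l m x y -> le_inf (dg m) (kp_deg x) ->
  le_inf (addv (dg m) t) (kp_deg x) <-> le_inf (addv (dg l) t) (kp_deg y).
Proof.
  intros [D _] Im. rewrite D. split; intros H i; have := H i; have := Im i; unfold addv;
  destruct (kp_deg x i); simpl; auto; lia.
Qed.

Lemma TH_val l m (x y : kp) t a : TH l m x y -> kp_map x (dg m) (addv (dg m) t) = Some a ->
  kp_map y Z (addv (dg l) t) = Some (cmp l a).
Proof.
  intros [D V] Ha. have I := proj2 (dom_of Ha). rewrite V // Ha. reflexivity.
Qed.

Lemma rg_seg (x : kp) m a n : kp_map x Z (dg m) = Some m -> kp_map x (dg m) n = Some a -> rg a = sr m.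
Proof. intros H1 H2. symmetry. exact (comp_sr H1 H2). Qed.

Lemma TH_seg l m (x y : kp) s t : kp_map x Z (dg m) = Some m -> sr l = sr m -> TH l m x y ->
  lev s t -> le_inf (addv (dg m) t) (kp_deg x) ->
  kp_map y (addv (dg l) s) (addv (dg l) t) = kp_map x (addv (dg m) s) (addv (dg m) t).
Proof.
  intros Hm Hlm HT Hst It.
  have Is : le_inf (addv (dg m) s) (kp_deg x).
  { apply (le_inf_mono (q:=addv (dg m) t)); auto. intro i; have := Hst i; unfold addv; lia. }
  have L1 : lev (dg m) (addv (dg m) s) by intro i; unfold addv; lia.
  have L2 : lev (addv (dg m) s) (addv (dg m) t) by intro i; have := Hst i; unfold addv; lia.
  destruct (defined L1 Is) as [a Ha]. destruct (defined L2 It) as [b Hb].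
  have Hab := kp_cmp Ha Hb.
  have Y1 := TH_val HT Ha. have Y2 := TH_val HT Hab.
  have Ra : sr l = rg a by rewrite Hlm; symmetry; exact (rg_seg Hm Ha).
  have Sab := comp_sr Ha Hb.
  rewrite -cmpA in Y2; auto.
  rewrite Hb. apply (seg_of Y1 Y2). rewrite sr_cmp; auto.
Qed.


Lemma addv0 (p : V) : addv p Z = p.
Proof. vext. unfold addv, zerov. lia. Qed.
Lemma subv_addv (p q : V) : lev p q -> addv p (subv q p) = q.
Proof. intro H. vext. unfold addv, subv. have := H x. lia. Qed.

Lemma self_seg (x : kp) m : kp_map x Z (dg m) = Some m -> kp_map x (dg m) (dg m) = Some (sr m).
Proof. apply kp_sr. Qed.

Lemma TH_head l m (x y : kp) : kp_map x Z (dg m) = Some m -> sr l = sr m -> TH l m x y ->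
  kp_map y Z (dg l) = Some l.
Proof.
  intros Hm Hlm HT. have A : kp_map x (dg m) (addv (dg m) Z) = Some (sr m) by rewrite addv0; exact (self_seg Hm).
  have := TH_val HT A. rewrite addv0 -Hlm cmp_id_r. auto.
Qed.

Lemma TH_val2 l m (x y : kp) N a : TH l m x y -> kp_map x (dg m) N = Some a ->
  kp_map y Z (addv (dg l) (subv N (dg m))) = Some (cmp l a).
Proof.
  intros HT Ha. apply (TH_val HT). rewrite subv_addv; auto. exact (proj1 (dom_of Ha)).
Qed.

Lemma TH_inv l m (x y : kp) : kp_map x Z (dg m) = Some m -> sr l = sr m -> TH l m x y -> TH m l y x.
Proof.
  intros Hm Hlm HT.
  have Im := proj2 (dom_of Hm).
  have Hl := TH_head Hm Hlm HT.
  split.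
  - destruct HT as [D _]. rewrite D. vext. have := Im x0. destruct (kp_deg x x0); simpl; auto.
    intro; f_equal; lia.
  - intros t Ht.
    have Ht' : le_inf (addv (dg m) t) (kp_deg x) by apply (proj2 (TH_deg_inf t HT Im)).
    have S := TH_seg Hm Hlm HT (lev0 t) Ht'. rewrite !addv0 in S. rewrite S.
    have L1 : lev (dg m) (addv (dg m) t) by intro i; unfold addv; lia.
    destruct (defined L1 Ht') as [a Ha]. rewrite Ha. simpl. exact (kp_cmp Hm Ha).
Qed.

Lemma sstar_SL (F : pset (M * M)) : in_SL F -> in_SL (sstar F).
Proof.
  intros [[s Hs] [H2 H3]]. split; [|split].
  - exists (map (fun p => (p.2, p.1)) s). intros [a b] Hp. unfold sstar in Hp. simpl in Hp.
    have := Hs _ Hp. intro Hi. apply in_map_iff. exists (b, a). auto.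
  - intros [a b] Hp. symmetry. exact (H2 _ Hp).
  - intros [a b] [c d] Hp Hq Hne. unfold sstar in *; simpl in *.
    have Hne' : (b, a) <> (d, c) by intro E; injection E; intros; subst; auto.
    destruct (H3 _ _ Hp Hq Hne'). simpl in *. auto.
Qed.

Lemma sstar_in (F : pset (M * M)) p : F p -> sstar F (p.2, p.1).
Proof. destruct p; auto. Qed.

Lemma theta_inv (F : pset (M * M)) (x : kp) p : in_SL F -> F p -> kp_map x Z (dg p.2) = Some p.2 ->
  kp_map (theta F x) Z (dg p.1) = Some p.1 /\ theta (sstar F) (theta F x) = x.
Proof.
  intros HF Fp Hx.
  have HT := theta_TH HF Fp Hx. have Hs := SL_sr HF Fp.
  have Hh := TH_head Hx Hs HT. split; auto.
  have HT2 := theta_TH (sstar_SL HF) (sstar_in Fp) Hh. simpl in HT2.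
  have HT3 := TH_inv Hx Hs HT.
  exact (TH_uniq Hh HT2 HT3).
Qed.

Definition agree (F G : pset (M * M)) (x : kp) : Prop :=
  exists p q N a b, F p /\ G q /\ kp_map x Z (dg p.2) = Some p.2 /\ kp_map x Z (dg q.2) = Some q.2 /\
    kp_map x (dg p.2) N = Some a /\ kp_map x (dg q.2) N = Some b /\ cmp p.1 a = cmp q.1 b.

Lemma cancel_c (l a l' b c : M) : sr l = rg a -> sr l' = rg b -> sr a = rg c -> sr b = rg c ->
  cmp (cmp l a) c = cmp (cmp l' b) c -> cmp l a = cmp l' b.
Proof.
  intros H1 H2 H3 H4 E.
  have S1 : sr (cmp l a) = rg c by rewrite sr_cmp.
  have S2 : sr (cmp l' b) = rg c by rewrite sr_cmp.
  exact (proj1 (uf_r S1 S2 erefl E)).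
Qed.

Lemma lvl_change (x : kp) (l m l' m' : M) N1 N2 a1 b1 a2 b2 :
  sr l = sr m -> sr l' = sr m' ->
  kp_map x Z (dg m) = Some m -> kp_map x Z (dg m') = Some m' ->
  kp_map x (dg m) N1 = Some a1 -> kp_map x (dg m') N1 = Some b1 ->
  kp_map x (dg m) N2 = Some a2 -> kp_map x (dg m') N2 = Some b2 ->
  cmp l a1 = cmp l' b1 -> cmp l a2 = cmp l' b2.
Proof.
  intros Hl Hl' Hm Hm' A1 B1 A2 B2 E.
  have Ra1 := rg_seg Hm A1. have Rb1 := rg_seg Hm' B1.
  have Ra2 := rg_seg Hm A2. have Rb2 := rg_seg Hm' B2.
  set N := joinv N1 N2.
  have I : le_inf N (kp_deg x) by apply le_inf_join; [exact (proj2 (dom_of A1))| exact (proj2 (dom_of A2))].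
  have L1 : lev N1 N by intro i; unfold N, joinv; lia.
  have L2 : lev N2 N by intro i; unfold N, joinv; lia.
  destruct (defined L1 I) as [c1 C1]. destruct (defined L2 I) as [c2 C2].
  have X1 := kp_cmp A1 C1. have Y1 := kp_cmp B1 C1.
  have X2 := kp_cmp A2 C2. have Y2 := kp_cmp B2 C2.
  rewrite X1 in X2. rewrite Y1 in Y2. injection X2; injection Y2; intros EY EX.
  apply (cancel_c (c:=c2)); try congruence; try exact (comp_sr A2 C2); try exact (comp_sr B2 C2).
  rewrite cmpA; [|congruence| exact (comp_sr A2 C2)].
  rewrite cmpA; [|congruence| exact (comp_sr B2 C2)].
  rewrite <- EX, <- EY.
  rewrite -cmpA; [|congruence| exact (comp_sr A1 C1)].
  rewrite -cmpA; [|congruence| exact (comp_sr B1 C1)].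
  rewrite E. reflexivity.
Qed.

Lemma agree_any (F G : pset (M * M)) (x : kp) : in_SL F -> in_SL G -> agree F G x ->
  forall p q N a b, F p -> G q -> kp_map x Z (dg p.2) = Some p.2 -> kp_map x Z (dg q.2) = Some q.2 ->
    kp_map x (dg p.2) N = Some a -> kp_map x (dg q.2) N = Some b -> cmp p.1 a = cmp q.1 b.
Proof.
  intros HF HG [p0 [q0 [N0 [a0 [b0 [Fp0 [Gq0 [Hp0 [Hq0 [A0 [B0 E0]]]]]]]]]]] p q N a b Fp Gq Hp Hq A B.
  have E1 := sel_uniq HF Fp0 Fp Hp0 Hp. have E2 := sel_uniq HG Gq0 Gq Hq0 Hq. subst p q.
  exact (lvl_change (SL_sr HF Fp0) (SL_sr HG Gq0) Hp0 Hq0 A0 B0 A B E0).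
Qed.

Lemma agree_refl (F : pset (M * M)) (x : kp) : valid F x -> agree F F x.
Proof.
  intros [HF [p [Fp Hp]]]. exists p, p, (dg p.2), (sr p.2), (sr p.2). repeat split; auto.
  all: apply self_seg; auto.
Qed.

Lemma agree_sym F G (x : kp) : agree F G x -> agree G F x.
Proof.
  intros [p [q [N [a [b H]]]]]. exists q, p, N, b, a. intuition.
Qed.

Lemma agree_trans F G H (x : kp) : in_SL F -> in_SL G -> in_SL H -> agree F G x -> agree G H x -> agree F H x.
Proof.
  intros HF HG HH A1 A2.
  have A1' := A1. have A2' := A2.
  destruct A1' as [p [q [N1 [a1 [b1 [Fp [Gq [Hp [Hq [X1 [Y1 E1]]]]]]]]]]].
  destruct A2' as [q' [r [N2 [b2 [c2 [Gq' [Hr [Hq' [Hr' [X2 [Y2 E2]]]]]]]]]]].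
  have E0 := sel_uniq HG Gq Gq' Hq Hq'. subst q'.
  set N := joinv N1 N2.
  have I : le_inf N (kp_deg x) by apply le_inf_join; [exact (proj2 (dom_of X1))| exact (proj2 (dom_of X2))].
  have Lp : lev (dg p.2) N by intro i; have := proj1 (dom_of X1) i; unfold N, joinv; lia.
  have Lq : lev (dg q.2) N by intro i; have := proj1 (dom_of Y1) i; unfold N, joinv; lia.
  have Lr : lev (dg r.2) N by intro i; have := proj1 (dom_of Y2) i; unfold N, joinv; lia.
  destruct (defined Lp I) as [a Ha]. destruct (defined Lq I) as [b Hb]. destruct (defined Lr I) as [c Hc].
  exists p, r, N, a, c. repeat split; auto.
  rewrite (agree_any HF HG A1 Fp Gq Hp Hq Ha Hb).
  exact (agree_any HG HH A2 Gq Hr Hq Hr' Hb Hc).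
Qed.


Lemma pset_ext (T : Type) (A B : pset T) : (forall a, A a <-> B a) -> A = B.
Proof. intro H. apply functional_extensionality. intro a. apply propositional_extensionality. auto. Qed.

Definition single (v : M) : pset (M * M) := fun r => r = (v, v).

Lemma single_SL v : in_SL (single v).
Proof.
  split; [|split].
  - exists [:: (v, v)]. intros p ->. simpl; auto.
  - intros p ->. reflexivity.
  - intros p q -> -> H. exfalso; auto.
Qed.

Lemma FP_single (F : pset (M * M)) p a v : in_SL F -> F p -> sr p.2 = rg a -> v = cmp p.2 a ->
  smul F (single v) = fun c => c = (cmp p.1 a, v).
Proof.
  intros HF Fp Ha Hv. apply pset_ext. intro c. split.
  - intros [p' [q' [e [Fp' [Hq' [He ->]]]]]]. unfold single in Hq'. subst q'. simpl in *.
    have He' := He. destruct He' as [E1 [E2 [E3 E4]]].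
    have Rae : sr a = rg e.2 by rewrite -E2 Hv sr_cmp.
    rewrite Hv in E3.
    rewrite cmpA in E3; [| exact Ha| exact Rae].
    have R2 : sr p.2 = rg (cmp a e.2) by rewrite rg_cmp.
    destruct (Lmin_ne E1 R2 E3) as [c0 Hc0].
    have Ep := SL_eq2 HF Fp' Fp Hc0. subst p'.
    rewrite Hv in He. have := proj1 (Lmin_ext _ Ha) He. intros ->. simpl.
    rewrite Hv. rewrite -(sr_cmp Ha) cmp_id_r. reflexivity.
  - intros ->. exists p, (v, v), (a, sr a). split; auto. split; [reflexivity|]. split.
    + simpl. rewrite Hv. apply (Lmin_ext _ Ha). reflexivity.
    + simpl. f_equal. rewrite Hv -(sr_cmp Ha) cmp_id_r. reflexivity.
Qed.

Lemma single_idem v : idempotent_SL (single v).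
Proof.
  split; [apply single_SL|].
  rewrite (@FP_single (single v) (v, v) (sr v) v (single_SL v) erefl).
  - simpl. rewrite cmp_id_r. reflexivity.
  - simpl. symmetry; apply rg_sr.
  - simpl. symmetry; apply cmp_id_r.
Qed.

Lemma idem_diag (P : pset (M * M)) r : idempotent_SL P -> P r -> r.1 = r.2.
Proof.
  intros [HP EP] Pr.
  have : smul P P r by rewrite EP.
  intros [p [q [e [Pp [Pq [He Hr]]]]]].
  destruct He as [E1 [E2 [E3 E4]]].
  have Sq := SL_sr HP Pq. have Sp := SL_sr HP Pp. have Sr := SL_sr HP Pr.
  have Hqr : q = r.
  { have Hr2 : r.2 = cmp q.2 e.2 by rewrite Hr.
    have R1 : sr q.2 = rg e.2 by rewrite -Sq.
    destruct (Lmin_ne (a := q.2) (b := r.2) (u := e.2) (v := sr r.2) R1 (esym (rg_sr _))) as [c Hc].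
    { rewrite cmp_id_r. symmetry. exact Hr2. }
    exact (SL_eq2 HP Pq Pr Hc). }
  subst q.
  have Hr2 : r.2 = cmp r.2 e.2 by rewrite {1}Hr.
  have R1 : sr r.2 = rg e.2 by rewrite -Sr.
  have D0 : dg e.2 = Z.
  { have := dg_cmp R1. rewrite -Hr2. intro D. vext. have := f_equal (fun f => f x) D. unfold addv, zerov. lia. }
  have Ve := vertex D0.
  have Hr1 : cmp r.1 e.2 = r.1 by rewrite -Ve -E2 cmp_id_r.
  rewrite Hr1 in E3.
  have Hr1' : r.1 = cmp p.1 e.1 by rewrite {1}Hr.
  have R2 : sr p.1 = rg e.1 by rewrite Sp.
  have Dp : dg p.1 = dg p.2.
  { apply (@addv_inj_l _ _ (dg e.1)). rewrite -(dg_cmp R2) -(dg_cmp E1) E3 -Hr1'. reflexivity. }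
  destruct (uf R2 E1 Dp (etrans (esym Hr1') (esym E3))) as [Ep _].
  destruct (Lmin_ne (a := p.1) (b := r.1) (u := e.1) (v := sr r.1) R2 (esym (rg_sr _))) as [c Hc].
  { rewrite cmp_id_r. symmetry. exact Hr1'. }
  have Epr := SL_eq1 HP Pp Pr Hc. subst p. congruence.
Qed.

Lemma germ_equiv_agree (F G : pset (M * M)) (x y : kp) : valid F x -> valid G y ->
  (germ_equiv (F, x) (G, y) <-> x = y /\ agree F G x).
Proof.
  intros [HF [p [Fp Hp]]] [HG [q [Gq Hq]]]. split.
  - intros [Exy [P [HP [[r [Pr Hr]] EFP]]]]. simpl in *. subst y. split; auto.
    have Dr := idem_diag HP Pr.
    destruct (pre2 Hp Hr) as [e [He HJ]].
    have : smul F P (cmp p.1 e.1, cmp r.2 e.2).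
    { exists p, r, e. split; [exact Fp|]. split; [exact Pr|]. split; [rewrite Dr; exact He| reflexivity]. }
    rewrite EFP. intros [q' [r' [e' [Gq' [Pr' [He' Eq]]]]]].
    injection Eq; intros Eq2 Eq1.
    have Dr' := idem_diag HP Pr'.
    destruct He as [F1 [F2 [F3 F4]]]. destruct He' as [G1 [G2 [G3 G4]]].
    have X1 : kp_map x Z (joinv (dg p.2) (dg r.2)) = Some (cmp q'.2 e'.1).
    { rewrite HJ F3 Eq2 -Dr' -G3. reflexivity. }
    destruct (PC X1 G1) as [Y1 Y2].
    rewrite F3 in HJ.
    have HJ' : kp_map x Z (joinv (dg p.2) (dg r.2)) = Some (cmp p.2 e.1) by rewrite HJ -F3.
    destruct (PC HJ' F1) as [_ Z2].
    exists p, q', (joinv (dg p.2) (dg r.2)), e.1, e'.1. repeat split; auto.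
  - intros [Exy Ha]. subst y. split; [reflexivity|].
    destruct Ha as [p0 [q0 [N [a [b [Fp0 [Gq0 [Hp0 [Hq0 [A [B E]]]]]]]]]]].
    have Xa := kp_cmp Hp0 A. have Xb := kp_cmp Hq0 B.
    exists (single (cmp p0.2 a)). split; [apply single_idem|]. split.
    + exists (cmp p0.2 a, cmp p0.2 a). split; [reflexivity|]. simpl.
      rewrite (dg0 Xa). exact Xa.
    + simpl. rewrite (FP_single HF Fp0 (comp_sr Hp0 A) erefl).
      have Ev : cmp p0.2 a = cmp q0.2 b by rewrite Xa in Xb; injection Xb; auto.
      rewrite (FP_single HG Gq0 (comp_sr Hq0 B) Ev). rewrite E. reflexivity.
Qed.


Local Notation germ := (germ L).

Lemma valid_SL F (x : kp) : valid F x -> in_SL F.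
Proof. intros [H _]; exact H. Qed.

Lemma class_eq F G (x y : kp) : valid F x -> valid G y ->
  (germ_class F x = germ_class G y <-> x = y /\ agree F G x).
Proof.
  intros VF VG. split.
  - intro E.
    have : germ_class G y (G, y).
    { split; auto. apply (germ_equiv_agree VG VG). split; auto. apply agree_refl; auto. }
    rewrite <- E. intros [_ Eq]. apply (germ_equiv_agree VF VG). exact Eq.
  - intros [<- A]. apply pset_ext. intros [H z]. unfold germ_class; simpl.
    split; intros [Vz Eq]; split; auto.
    + apply (germ_equiv_agree VG Vz). apply (germ_equiv_agree VF Vz) in Eq. destruct Eq as [<- A2].
      split; auto. apply (agree_trans (valid_SL VG) (valid_SL VF) (valid_SL Vz)); auto.
      apply agree_sym; auto.
    + apply (germ_equiv_agree VF Vz). apply (germ_equiv_agree VG Vz) in Eq. destruct Eq as [<- A2].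
      split; auto. apply (agree_trans (valid_SL VF) (valid_SL VG) (valid_SL Vz)); auto.
Qed.

Definition mkg F (x : kp) (H : valid F x) : germ :=
  exist _ (germ_class F x) (ex_intro _ F (ex_intro _ x (conj H erefl))).

Lemma germ_ext (g1 g2 : germ) : proj1_sig g1 = proj1_sig g2 -> g1 = g2.
Proof. destruct g1, g2; simpl; intros; subst; f_equal; apply proof_irrelevance. Qed.

Lemma is_germ_mkg F (x : kp) (H : valid F x) : is_germ_of (mkg H) F x.
Proof. split; auto. Qed.

Lemma is_germ_eq (g : germ) F G (x y : kp) : is_germ_of g F x -> is_germ_of g G y -> y = x /\ agree F G x.
Proof.
  intros [V1 E1] [V2 E2]. rewrite E1 in E2. apply (class_eq V1 V2) in E2. destruct E2; auto.
Qed.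

Lemma is_germ_transfer (g : germ) F G (x : kp) : is_germ_of g F x -> valid G x -> agree F G x -> is_germ_of g G x.
Proof.
  intros [V1 E1] V2 A. split; auto. rewrite E1. apply (class_eq V1 V2). auto.
Qed.

Lemma germ_uniq (g1 g2 : germ) F (x : kp) : is_germ_of g1 F x -> is_germ_of g2 F x -> g1 = g2.
Proof. intros [_ E1] [_ E2]. apply germ_ext. congruence. Qed.

Lemma germ_is (g : germ) : exists F x, is_germ_of g F x.
Proof. destruct g as [c [F [x [V E]]]]. exists F, x. split; auto. Qed.

Lemma germ_s_val (g : germ) F (x : kp) : is_germ_of g F x -> germ_s g = x.
Proof.
  intro H. unfold germ_s.
  have [F' H'] : exists F', is_germ_of g F' (epsilon (germ_inh g) (fun x => exists F, is_germ_of g F x)).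
  { apply epsilon_spec. exists x, F. auto. }
  exact (proj1 (is_germ_eq H H')).
Qed.

Lemma theta_agree F G (x : kp) : valid F x -> valid G x -> agree F G x -> theta F x = theta G x.
Proof.
  intros VF VG [p [q [N [a [b [Fp [Gq [Hp [Hq [A [B E]]]]]]]]]]].
  have HF := valid_SL VF. have HG := valid_SL VG.
  have T1 := theta_TH HF Fp Hp. have T2 := theta_TH HG Gq Hq.
  have Sp := SL_sr HF Fp. have Sq := SL_sr HG Gq.
  have Ra := rg_seg Hp A. have Rb := rg_seg Hq B.
  have Da := kp_dg A. have Db := kp_dg B.
  have [LN IN] := dom_of A. have [LN' _] := dom_of B.
  set d0 := addv (dg p.1) (subv N (dg p.2)).
  have Ed : forall i, dg p.1 i + (N i - dg p.2 i) = dg q.1 i + (N i - dg q.2 i).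
  { intro i. have := f_equal (fun f => f i) (f_equal (@dg k L) E).
    rewrite !dg_cmp; try congruence. rewrite Da Db. unfold addv, subv. lia. }
  have V1 := TH_val2 T1 A.
  apply (path_eq_from (d0 := d0)).
  - rewrite (proj1 T1) (proj1 T2). vext. have := IN x0. have := LN x0. have := LN' x0. have := Ed x0.
    destruct (kp_deg x x0); simpl; auto. intros; f_equal; lia.
  - exact (proj2 (dom_of V1)).
  - intros n Hn In.
    set N' := addv N (subv n d0).
    have IN' : le_inf N' (kp_deg x).
    { intro i. have := In i. rewrite (proj1 T1). have := LN i. have := Hn i. have := IN i.
      unfold N', d0, addv, subv. destruct (kp_deg x i); simpl; auto. lia. }
    have LNN : lev N N' by intro i; unfold N', addv; lia.
    destruct (defined LNN IN') as [c C].
    have A' := kp_cmp A C. have B' := kp_cmp B C.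
    have Y1 := TH_val2 T1 A'. have Y2 := TH_val2 T2 B'.
    have E1 : addv (dg p.1) (subv N' (dg p.2)) = n.
    { vext. have := Hn x0. have := LN x0. unfold N', d0, addv, subv. lia. }
    have E2 : addv (dg q.1) (subv N' (dg q.2)) = n.
    { vext. have := Hn x0. have := LN x0. have := LN' x0. have := Ed x0. unfold N', d0, addv, subv. lia. }
    rewrite E1 in Y1. rewrite E2 in Y2. rewrite Y1 Y2. f_equal.
    rewrite -cmpA; [| congruence | exact (comp_sr A C)].
    rewrite -cmpA; [| congruence | exact (comp_sr B C)].
    rewrite E. reflexivity.
Qed.

Lemma germ_r_val (g : germ) F (x : kp) : is_germ_of g F x -> germ_r g = theta F x.
Proof.
  intro H. unfold germ_r.
  have [F' [x' [H' ->]]] : exists F' x', is_germ_of g F' x' /\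
     epsilon (germ_inh g) (fun y => exists F x, is_germ_of g F x /\ y = theta F x) = theta F' x'.
  { apply (epsilon_spec (germ_inh g) (fun y => exists F x, is_germ_of g F x /\ y = theta F x)).
    exists (theta F x), F, x. auto. }
  destruct (is_germ_eq H H') as [-> A].
  symmetry. apply theta_agree; auto. exact (proj1 H). exact (proj1 H').
Qed.


Lemma smul_SL (F G : pset (M * M)) : finitely_aligned L -> in_SL F -> in_SL G -> in_SL (smul F G).
Proof.
  intros HL HF HG.
  have HF' := HF. have HG' := HG.
  destruct HF' as [[sF HsF] [SF _]]. destruct HG' as [[sG HsG] [SG _]].
  pose lm := fun l m => proj1_sig (constructive_indefinite_description _ (HL l m)).
  have Hlm : forall l m a, Lmin l m a <-> In a (lm l m).
  { intros l m. exact (proj2_sig (constructive_indefinite_description _ (HL l m))). }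
  split; [|split].
  - exists (flat_map (fun p => flat_map (fun q => map (fun e => (cmp p.1 e.1, cmp q.2 e.2)) (lm p.2 q.1)) sG) sF).
    intros c [p [q [e [Fp [Gq [He ->]]]]]].
    apply in_flat_map. exists p. split; [auto|].
    apply in_flat_map. exists q. split; [auto|].
    apply in_map_iff. exists e. split; auto. apply Hlm; auto.
  - intros c [p [q [e [Fp [Gq [[E1 [E2 [E3 E4]]] ->]]]]]]. simpl.
    have S1 := SF p Fp. have S2 := SG q Gq.
    rewrite sr_cmp; [|congruence]. rewrite sr_cmp; [|congruence].
    have := f_equal (@sr k L) E3. rewrite sr_cmp; auto. rewrite sr_cmp; auto.
  - intros c c' [p [q [e [Fp [Gq [He ->]]]]]] [p' [q' [e' [Fp' [Gq' [He' ->]]]]]] Hne. simpl.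
    have S1 := SF p Fp. have S2 := SG q Gq. have S1' := SF p' Fp'. have S2' := SG q' Gq'.
    have He0 := He. have He0' := He'.
    destruct He as [E1 [E2 [E3 E4]]]. destruct He' as [E1' [E2' [E3' E4']]].
    destruct (Lmin_dg He0) as [D1 D2]. destruct (Lmin_dg He0') as [D1' D2'].
    split; intros z [Z1 [Z2 [Z3 Z4]]].
    + rewrite sr_cmp in Z1; [|congruence]. rewrite sr_cmp in Z2; [|congruence].
      rewrite cmpA in Z3; [|congruence|auto]. rewrite cmpA in Z3; [|congruence|auto].
      have R1 : sr p.1 = rg (cmp e.1 z.1) by rewrite rg_cmp; auto; congruence.
      have R2 : sr p'.1 = rg (cmp e'.1 z.2) by rewrite rg_cmp; auto; congruence.
      destruct (Lmin_ne R1 R2 Z3) as [w Hw].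
      have Ep := SL_eq1 HF Fp Fp' Hw. subst p'.
      have X := lcancel R1 R2 Z3.
      have Y : cmp q.1 (cmp e.2 z.1) = cmp q'.1 (cmp e'.2 z.2).
      { rewrite -cmpA; [|congruence| have := f_equal (@sr k L) E3; rewrite !sr_cmp; auto; congruence].
        rewrite -cmpA; [|congruence| have := f_equal (@sr k L) E3'; rewrite !sr_cmp; auto; congruence].
        rewrite -E3 -E3' cmpA; [|congruence|auto]. rewrite cmpA; [|congruence|auto]. rewrite X. reflexivity. }
      have Rq : sr q.1 = rg (cmp e.2 z.1).
      { rewrite rg_cmp; auto. have := f_equal (@sr k L) E3; rewrite !sr_cmp; auto; congruence. }
      have Rq' : sr q'.1 = rg (cmp e'.2 z.2).
      { rewrite rg_cmp; auto. have := f_equal (@sr k L) E3'; rewrite !sr_cmp; auto; congruence. }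
      destruct (Lmin_ne Rq Rq' Y) as [w' Hw'].
      have Eq := SL_eq1 HG Gq Gq' Hw'. subst q'.
      have De : dg e.1 = dg e'.1 by rewrite D1 D1'.
      destruct (uf Z1 Z2 De X) as [Ee1 _].
      apply Hne. rewrite Ee1. f_equal.
      rewrite Ee1 in E3. rewrite E3 in E3'. f_equal. exact (lcancel E2 E2' E3').
    + rewrite sr_cmp in Z1; [|congruence]. rewrite sr_cmp in Z2; [|congruence].
      rewrite cmpA in Z3; [|congruence|auto]. rewrite cmpA in Z3; [|congruence|auto].
      have R1 : sr q.2 = rg (cmp e.2 z.1) by rewrite rg_cmp; auto; congruence.
      have R2 : sr q'.2 = rg (cmp e'.2 z.2) by rewrite rg_cmp; auto; congruence.
      destruct (Lmin_ne R1 R2 Z3) as [w Hw].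
      have Eq := SL_eq2 HG Gq Gq' Hw. subst q'.
      have X := lcancel R1 R2 Z3.
      have Z1' : sr e.1 = rg z.1 by have := f_equal (@sr k L) E3; rewrite !sr_cmp; auto; congruence.
      have Z2' : sr e'.1 = rg z.2 by have := f_equal (@sr k L) E3'; rewrite !sr_cmp; auto; congruence.
      have Y : cmp p.2 (cmp e.1 z.1) = cmp p'.2 (cmp e'.1 z.2).
      { rewrite -cmpA; [|congruence| auto]. rewrite -cmpA; [|congruence| auto].
        rewrite E3 E3' cmpA; [|congruence|auto]. rewrite cmpA; [|congruence|auto]. rewrite X. reflexivity. }
      have Rp : sr p.2 = rg (cmp e.1 z.1) by rewrite rg_cmp; auto.
      have Rp' : sr p'.2 = rg (cmp e'.1 z.2) by rewrite rg_cmp; auto.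
      destruct (Lmin_ne Rp Rp' Y) as [w' Hw'].
      have Ep := SL_eq2 HF Fp Fp' Hw'. subst p'.
      have De : dg e.2 = dg e'.2 by rewrite D2 D2'.
      destruct (uf Z1 Z2 De X) as [Ee2 _].
      apply Hne. rewrite Ee2. f_equal. f_equal.
      rewrite Ee2 in E3. rewrite -E3' in E3. exact (lcancel E1 E1' E3).
Qed.


Lemma T2_fwd (F G : pset (M * M)) (x : kp) p q : in_SL F -> in_SL G -> G q -> kp_map x Z (dg q.2) = Some q.2 ->
  F p -> kp_map (theta G x) Z (dg p.2) = Some p.2 ->
  exists e, Lmin p.2 q.1 e /\ kp_map x (dg q.2) (dg (cmp q.2 e.2)) = Some e.2 /\
    kp_map x Z (dg (cmp q.2 e.2)) = Some (cmp q.2 e.2) /\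
    kp_map (theta G x) Z (dg (cmp q.1 e.2)) = Some (cmp q.1 e.2).
Proof.
  intros HF HG Gq Hq Fp Hp.
  have T := theta_TH HG Gq Hq. have Sq := SL_sr HG Gq.
  have Hh := TH_head Hq Sq T.
  destruct (pre2 Hp Hh) as [e [He HJ]].
  have He0 := He. destruct He0 as [E1 [E2 [E3 E4]]].
  rewrite E3 in HJ.
  have Sg := seg_of Hh HJ E2.
  set J := joinv (dg p.2) (dg q.1).
  have LJ : lev (dg q.1) J by intro i; unfold J, joinv; lia.
  set t := subv J (dg q.1).
  have EJ : J = addv (dg q.1) t by rewrite subv_addv.
  have IJ := proj2 (dom_of HJ).
  have Im := proj2 (dom_of Hq).
  have It : le_inf (addv (dg q.2) t) (kp_deg x) by apply (proj2 (TH_deg_inf t T Im)); rewrite -EJ.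
  have S := TH_seg Hq Sq T (lev0 t) It. rewrite !addv0 -EJ Sg in S.
  have X := kp_cmp Hq (esym S).
  have D : dg (cmp q.2 e.2) = addv (dg q.2) t := dg0 X.
  exists e. split; auto. rewrite D. split; [symmetry; exact S|]. split; [exact X|].
  rewrite (dg0 HJ). exact HJ.
Qed.

Lemma T2_in (F G : pset (M * M)) (x : kp) : in_SL F -> in_SL G -> DF G x -> DF F (theta G x) -> DF (smul F G) x.
Proof.
  intros HF HG [q [Gq Hq]] [p [Fp Hp]].
  destruct (T2_fwd HF HG Gq Hq Fp Hp) as [e [He [_ [X _]]]].
  exists (cmp p.1 e.1, cmp q.2 e.2). split; [|exact X].
  exists p, q, e. auto.
Qed.

Lemma T2_out (F G : pset (M * M)) (x : kp) : in_SL F -> in_SL G -> DF (smul F G) x -> DF G x /\ DF F (theta G x).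
Proof.
  intros HF HG [c [[p [q [e [Fp [Gq [He ->]]]]]] Hx]]. simpl in Hx.
  have He0 := He. destruct He0 as [E1 [E2 [E3 E4]]].
  have Sq := SL_sr HG Gq.
  have R : sr q.2 = rg e.2 by congruence.
  destruct (PC Hx R) as [Hq Sg].
  split; [exists q; auto|].
  have T := theta_TH HG Gq Hq.
  have Y := TH_val2 T Sg. rewrite -E3 in Y.
  exists p. split; auto. exact (proj1 (PC Y E1)).
Qed.

Lemma T5 (F F' G G' : pset (M * M)) (x : kp) : valid G x -> valid G' x -> agree G G' x ->
  valid F (theta G x) -> valid F' (theta G x) -> agree F F' (theta G x) ->
  agree (smul F G) (smul F' G') x.
Proof.
  intros VG VG' AG VF VF' AF.
  have HG := valid_SL VG. have HG' := valid_SL VG'. have HF := valid_SL VF. have HF' := valid_SL VF'.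
  have Ey : theta G' x = theta G x by symmetry; apply theta_agree.
  destruct VG as [_ [q [Gq Hq]]]. destruct VG' as [_ [q' [Gq' Hq']]].
  destruct VF as [_ [p [Fp Hp]]]. destruct VF' as [_ [p' [Fp' Hp']]].
  destruct (T2_fwd HF HG Gq Hq Fp Hp) as [e [He [S1 [X1 Y1]]]].
  rewrite -Ey in Hp'.
  destruct (T2_fwd HF' HG' Gq' Hq' Fp' Hp') as [e' [He' [S1' [X1' Y1']]]].
  rewrite Ey in Y1'.
  set N := joinv (dg (cmp q.2 e.2)) (dg (cmp q'.2 e'.2)).
  have IN : le_inf N (kp_deg x) by apply le_inf_join; [exact (proj2 (dom_of X1))| exact (proj2 (dom_of X1'))].
  have L1 : lev (dg (cmp q.2 e.2)) N by intro i; unfold N, joinv; lia.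
  have L2 : lev (dg (cmp q'.2 e'.2)) N by intro i; unfold N, joinv; lia.
  destruct (defined L1 IN) as [a A]. destruct (defined L2 IN) as [b B].
  exists (cmp p.1 e.1, cmp q.2 e.2), (cmp p'.1 e'.1, cmp q'.2 e'.2), N, a, b.
  split; [exists p, q, e; auto|]. split; [exists p', q', e'; auto|].
  split; [exact X1|]. split; [exact X1'|]. split; [exact A|]. split; [exact B|]. simpl.
  have C := kp_cmp S1 A. have C' := kp_cmp S1' B.
  have T := theta_TH HG Gq Hq. have T' := theta_TH HG' Gq' Hq'. rewrite Ey in T'.
  have W := TH_val2 T C. have W' := TH_val2 T' C'.
  have Eqq := agree_any HG HG' AG Gq Gq' Hq Hq' C C'.
  have EM : addv (dg q.1) (subv N (dg q.2)) = addv (dg q'.1) (subv N (dg q'.2)) by rewrite -(dg0 W) -(dg0 W') Eqq.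
  have He0 := He. destruct He0 as [E1 [E2 [E3 E4]]].
  have He0' := He'. destruct He0' as [E1' [E2' [E3' E4']]].
  have Ra : sr e.2 = rg a by exact (comp_sr S1 A).
  have Rb : sr e'.2 = rg b by exact (comp_sr S1' B).
  have Sa : sr e.1 = rg a by have := f_equal (@sr k L) E3; rewrite !sr_cmp; auto; congruence.
  have Sb : sr e'.1 = rg b by have := f_equal (@sr k L) E3'; rewrite !sr_cmp; auto; congruence.
  rewrite -cmpA in W; [|congruence|auto]. rewrite -E3 cmpA in W; [|auto| congruence].
  rewrite -cmpA in W'; [|congruence|auto]. rewrite -E3' cmpA in W'; [|auto| congruence].
  have R1 : sr p.2 = rg (cmp e.1 a) by rewrite rg_cmp.
  have R1' : sr p'.2 = rg (cmp e'.1 b) by rewrite rg_cmp.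
  have Z1 := seg_of Hp W R1.
  rewrite Ey in Hp'. have Z2 := seg_of Hp' W' R1'.
  rewrite -EM in Z2.
  have Eqf := agree_any HF HF' AF Fp Fp' Hp Hp' Z1 Z2.
  have Sp := SL_sr HF Fp. have Sp' := SL_sr HF' Fp'.
  rewrite cmpA; [|congruence|auto]. rewrite cmpA; [|congruence|auto]. exact Eqf.
Qed.


Lemma germ_mul_val (F G : pset (M * M)) (x : kp) (a b : germ) : finitely_aligned L ->
  is_germ_of b G x -> is_germ_of a F (theta G x) -> is_germ_of (germ_mul a b) (smul F G) x.
Proof.
  intros HL Hb Ha.
  have VG := proj1 Hb. have VF := proj1 Ha. have HG := valid_SL VG. have HF := valid_SL VF.
  have VFG : valid (smul F G) x := conj (smul_SL HL HF HG) (T2_in HF HG (proj2 VG) (proj2 VF)).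
  have [F' [G' [x' [B' [A' C']]]]] : exists F' G' x', is_germ_of b G' x' /\ is_germ_of a F' (theta G' x') /\
      is_germ_of (germ_mul a b) (smul F' G') x'.
  { unfold germ_mul. apply (epsilon_spec (inhabits a) (fun c => exists F G x,
      is_germ_of b G x /\ is_germ_of a F (theta G x) /\ is_germ_of c (smul F G) x)).
    exists (mkg VFG), F, G, x. split; auto. split; auto. apply is_germ_mkg. }
  destruct (is_germ_eq Hb B') as [-> AG].
  have VG' := proj1 B'.
  have Et := theta_agree VG VG' AG. rewrite -Et in A'.
  destruct (is_germ_eq Ha A') as [_ AF].
  have AFG := T5 VG VG' AG VF (proj1 A') AF.
  apply (is_germ_transfer C' VFG).
  apply agree_sym. exact AFG.
Qed.

Lemma agree_star (F F' : pset (M * M)) (x : kp) : valid F x -> valid F' x -> agree F F' x ->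
  agree (sstar F) (sstar F') (theta F x).
Proof.
  intros VF VF' AF.
  have Ey : theta F' x = theta F x by symmetry; apply theta_agree.
  have HF := valid_SL VF. have HF' := valid_SL VF'.
  destruct AF as [p [q [N [a [b [Fp [Fq [Hp [Hq [A [B E]]]]]]]]]]].
  have T := theta_TH HF Fp Hp. have T' := theta_TH HF' Fq Hq. rewrite Ey in T'.
  have W := TH_val2 T A. have W' := TH_val2 T' B.
  have EM : addv (dg p.1) (subv N (dg p.2)) = addv (dg q.1) (subv N (dg q.2)) by rewrite -(dg0 W) -(dg0 W') E.
  rewrite -EM in W'.
  have Sp := SL_sr HF Fp. have Sq := SL_sr HF' Fq.
  have Hh := TH_head Hp Sp T. have Hh' := TH_head Hq Sq T'.
  have Z1 := seg_of Hh W (etrans Sp (esym (rg_seg Hp A))).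
  have Z2 := seg_of Hh' W' (etrans Sq (esym (rg_seg Hq B))).
  exists (p.2, p.1), (q.2, q.1), (addv (dg p.1) (subv N (dg p.2))), a, b.
  split; [apply sstar_in; auto|]. split; [apply sstar_in; auto|]. simpl.
  split; auto. split; auto. split; auto. split; auto.
  have X := kp_cmp Hp A. have Y := kp_cmp Hq B. rewrite X in Y. injection Y; auto.
Qed.

Lemma valid_star (F : pset (M * M)) (x : kp) : valid F x -> valid (sstar F) (theta F x).
Proof.
  intros [HF [p [Fp Hp]]]. split; [apply sstar_SL; auto|].
  exists (p.2, p.1). split; [apply sstar_in; auto|]. simpl. exact (proj1 (theta_inv HF Fp Hp)).
Qed.

Lemma germ_inv_val (F : pset (M * M)) (x : kp) (a : germ) :
  is_germ_of a F x -> is_germ_of (germ_inv a) (sstar F) (theta F x).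
Proof.
  intro Ha. have VF := proj1 Ha.
  have VS := valid_star VF.
  have [F' [x' [A' C']]] : exists F' x', is_germ_of a F' x' /\ is_germ_of (germ_inv a) (sstar F') (theta F' x').
  { unfold germ_inv. apply (epsilon_spec (inhabits a) (fun c => exists F x,
      is_germ_of a F x /\ is_germ_of c (sstar F) (theta F x))).
    exists (mkg VS), F, x. split; auto. apply is_germ_mkg. }
  destruct (is_germ_eq Ha A') as [-> AF].
  have VF' := proj1 A'.
  have Et := theta_agree VF VF' AF. rewrite -Et in C'.
  apply (is_germ_transfer C' VS).
  rewrite Et. apply agree_star; auto. apply agree_sym; auto.
Qed.

Lemma sstar_sstar (F : pset (M * M)) : sstar (sstar F) = F.
Proof. apply pset_ext. intros [a b]. reflexivity. Qed.

Lemma Psi_mkg F (x : kp) (H : valid F x) : Psi F (mkg H).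
Proof. exists x. split; [exact (proj2 H)| apply is_germ_mkg]. Qed.

(** algebraic clauses *)
Lemma clause_inv (F : pset (M * M)) : in_SL F -> Psi (sstar F) = gop_inv (Psi F).
Proof.
  intro HF. apply pset_ext. intro g. split.
  - intros [x [Dx Hg]].
    have VS : valid (sstar F) x := proj1 Hg.
    have VSS := valid_star VS. rewrite sstar_sstar in VSS.
    exists (mkg VSS). split; [apply Psi_mkg|].
    have H1 := germ_inv_val (is_germ_mkg VSS).
    destruct VS as [HS [p [Sp Hp]]].
    have := proj2 (theta_inv HS Sp Hp). rewrite sstar_sstar. intro E. rewrite E in H1.
    exact (germ_uniq Hg H1).
  - intros [a [[x [Dx Ha]] ->]].
    have H1 := germ_inv_val Ha. exists (theta F x). split; auto. exact (proj2 (proj1 H1)).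
Qed.

Lemma clause_mul (F G : pset (M * M)) : finitely_aligned L -> in_SL F -> in_SL G ->
  Psi (smul F G) = gop_mul (Psi F) (Psi G).
Proof.
  intros HL HF HG. apply pset_ext. intro g. split.
  - intros [x [Dx Hg]].
    destruct (T2_out HF HG Dx) as [DG DF'].
    have VG : valid G x := conj HG DG. have VF : valid F (theta G x) := conj HF DF'.
    exists (mkg VF), (mkg VG). split; [apply Psi_mkg|]. split; [apply Psi_mkg|]. split.
    + rewrite (germ_s_val (is_germ_mkg VF)) (germ_r_val (is_germ_mkg VG)). reflexivity.
    + have H1 := germ_mul_val HL (is_germ_mkg VG) (is_germ_mkg VF). exact (germ_uniq Hg H1).
  - intros [a [b [[y [Dy Ha]] [[x [Dx Hb]] [Es ->]]]]].
    rewrite (germ_s_val Ha) (germ_r_val Hb) in Es. subst y.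
    have H1 := germ_mul_val HL Hb Ha. exists x. split; auto. exact (proj2 (proj1 H1)).
Qed.

Lemma xp_valid (F : pset (M * M)) p : in_SL F -> F p -> valid F (xp p.2).
Proof. intros HF Fp. split; auto. exists p. split; auto. apply xp_val. Qed.

Lemma xp_pre (m : M) n a : kp_map (xp m) Z n = Some a -> exists e, sr a = rg e /\ m = cmp a e.
Proof.
  intro Ha. have Hm := xp_val m.
  destruct (pre2 Ha Hm) as [e [He HJ]].
  have Ln : lev n (dg m). { intro i. exact (proj2 (dom_of Ha) i). }
  have J : joinv n (dg m) = dg m by vext; unfold joinv; have := Ln x; lia.
  rewrite J Hm in HJ. injection HJ; intro E. exists e.1. split; [exact (proj1 He)| exact E].
Qed.

Lemma clause_inj_half (F G : pset (M * M)) : in_SL F -> in_SL G -> Psi F = Psi G -> forall p, F p -> G p.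
Proof.
  intros HF HG E p Fp.
  have V := xp_valid HF Fp.
  have P1 : Psi G (mkg V) by rewrite -E; apply Psi_mkg.
  destruct P1 as [x' [Dx' Hg]].
  destruct (is_germ_eq (is_germ_mkg V) Hg) as [-> AFG].
  have AFG' := AFG.
  destruct AFG' as [p0 [q [N [a [b [Fp0 [Gq [Hp0 [Hq [A [B Eab]]]]]]]]]]].
  have Ep := sel_uniq HF Fp0 Fp Hp0 (xp_val p.2). subst p0.
  have V2 := xp_valid HG Gq.
  have P2 : Psi F (mkg V2) by rewrite E; apply Psi_mkg.
  destruct P2 as [z [Dz Hz]].
  destruct (is_germ_eq (is_germ_mkg V2) Hz) as [-> _].
  destruct Dz as [p' [Fp' Hp']].
  destruct (xp_pre Hq) as [e1 [R1 E1]].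
  destruct (xp_pre Hp') as [e2 [R2 E2]].
  have Se2 : sr e2 = rg e1 by rewrite -R1 E2 (sr_cmp R2).
  have Rm : sr p'.2 = rg (cmp e2 e1) by rewrite (rg_cmp Se2).
  have Xm : cmp p'.2 (cmp e2 e1) = cmp p.2 (sr p.2).
  { rewrite cmp_id_r -(cmpA R2 Se2) -E2 -E1. reflexivity. }
  destruct (Lmin_ne Rm (esym (rg_sr _)) Xm) as [c Hc].
  have Ep := SL_eq2 HF Fp' Fp Hc. subst p'.
  have D1 := dg_cmp R1. have D2 := dg_cmp R2. rewrite -E1 in D1. rewrite -E2 in D2.
  have De1 : dg e1 = Z.
  { vext. have := f_equal (fun f => f x) D1. have := f_equal (fun f => f x) D2. unfold addv, zerov. lia. }
  have Ve := vertex De1. rewrite -Ve -R1 cmp_id_r in E1.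
  destruct q as [q1 q2]. simpl in E1, Gq, Hq, B, Eab. rewrite -E1 in Gq Hq B.
  have LN := proj1 (dom_of A). have IN := proj2 (dom_of A).
  have EN : N = dg p.2.
  { vext. have := LN x. have := IN x. simpl. lia. }
  subst N. have Hs := self_seg (xp_val p.2).
  change (kp_map (xp p.2) (dg p.2) (dg p.2) = Some b) in B.
  change (kp_map (xp p.2) (dg p.2) (dg p.2) = Some a) in A.
  rewrite Hs in A. rewrite Hs in B. injection A; injection B; intros; subst a b.
  have Sp := SL_sr HF Fp. have Sq := SL_sr HG Gq. simpl in Sq.
  have X1 : cmp p.1 (sr p.2) = p.1 by rewrite -Sp cmp_id_r.
  have X2 : cmp q1 (sr p.2) = q1 by rewrite -Sq cmp_id_r.
  rewrite X1 X2 in Eab. rewrite -Eab in Gq. destruct p; exact Gq.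
Qed.


Definition QH (H : pset (M * M)) : pset (M * M) := fun r => exists q, H q /\ r = (q.2, q.2).

Lemma QH_SL H : in_SL H -> in_SL (QH H).
Proof.
  intro HH. have HH' := HH. destruct HH' as [[sH HsH] _].
  split; [|split].
  - exists (map (fun q => (q.2, q.2)) sH). intros r [q [Hq ->]]. apply in_map_iff. exists q; auto.
  - intros r [q [Hq ->]]. reflexivity.
  - intros r r' [q [Hq ->]] [q' [Hq' ->]] Hne. simpl.
    have W : forall z, ~ Lmin q.2 q'.2 z.
    { intros z Hz. apply Hne. have := SL_eq2 HH Hq Hq' Hz. intros ->. reflexivity. }
    auto.
Qed.

Lemma restrict_Psi (F H : pset (M * M)) (c : germ) (x : kp) : finitely_aligned L -> in_SL H ->
  is_germ_of c F x -> (Psi (smul F (QH H)) c <-> DF H x).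
Proof.
  intros HL HH Hc. have VF := proj1 Hc. have HF := valid_SL VF.
  have HQ := smul_SL HL HF (QH_SL HH).
  split.
  - intros [x' [Dx' Hc']]. destruct (is_germ_eq Hc Hc') as [-> _].
    destruct Dx' as [r [[p [q [e [Fp [[h [Hh ->]] [He ->]]]]]] Hx]]. simpl in *.
    have He0 := He. destruct He0 as [E1 [E2 [E3 E4]]].
    exists h. split; auto. exact (proj1 (PC Hx E2)).
  - intros [h [Hh Hx]].
    destruct VF as [_ [p [Fp Hp]]].
    destruct (pre2 Hp Hx) as [e [He HJ]].
    have He0 := He. destruct He0 as [E1 [E2 [E3 E4]]].
    have Sg := seg_of Hp HJ E1.
    have HJ' := HJ. rewrite E3 in HJ'.
    have DQ : DF (smul F (QH H)) x.
    { exists (cmp p.1 e.1, cmp h.2 e.2). split.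
      - exists p, (h.2, h.2), e. split; auto. split; [exists h; auto|]. split; auto.
      - simpl. rewrite (dg0 HJ'). exact HJ'. }
    have VQ : valid (smul F (QH H)) x := conj HQ DQ.
    exists x. split; auto.
    apply (is_germ_transfer Hc VQ).
    exists p, (cmp p.1 e.1, cmp h.2 e.2), (joinv (dg p.2) (dg h.2)), e.1, (sr (cmp h.2 e.2)).
    split; auto. split; [exists p, (h.2, h.2), e; split; auto; split; [exists h; auto|]; split; auto|].
    have HJ2 : kp_map x Z (dg (cmp h.2 e.2)) = Some (cmp h.2 e.2) by rewrite (dg0 HJ'); exact HJ'.
    have SS := self_seg HJ2. rewrite {2}(dg0 HJ') in SS.
    simpl. split; auto. split; auto. split; auto. split; auto.
    have Sp := SL_sr HF Fp.
    have Es : sr e.1 = sr e.2 by have := f_equal (@sr k L) E3; rewrite !sr_cmp; auto.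
    rewrite (sr_cmp E2) -Es -(sr_cmp (l:=p.1) (m:=e.1)) ?cmp_id_r //. congruence.
Qed.


(** generic topology *)
Lemma gen_open_sub (T : Type) (S : pset (pset T)) V : S V -> gen_open S V.
Proof.
  intros HV x Vx. exists [:: V]. split; [|split].
  - intros V' [<-|[]]; auto.
  - intros V' [<-|[]]; auto.
  - intros y Hy. apply Hy. left; auto.
Qed.

Lemma cont_gen (T U : Type) (ST : pset (pset T)) (SU : pset (pset U)) (A : pset T) (f : T -> U) :
  ST A -> (forall W, SU W -> exists W', ST W' /\ forall c, A c -> (W' c <-> W (f c))) ->
  forall W, gen_open SU W -> gen_open ST (fun c => A c /\ W (f c)).
Proof.
  intros HA HW W HWo c [Ac Wc]. destruct (HWo _ Wc) as [l [l1 [l2 l3]]].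
  have [l' [m1 [m2 m3]]] : exists l', (forall V', In V' l' -> ST V') /\ (forall V', In V' l' -> V' c) /\
    (forall c', A c' -> (forall V', In V' l' -> V' c') -> forall V, In V l -> V (f c')).
  { clear l3. induction l as [|V l IH].
    - exists nil. simpl. split; [tauto|]. split; [tauto|]. intros; tauto.
    - destruct IH as [l' [m1 [m2 m3]]].
      + intros; apply l1; right; auto.
      + intros; apply l2; right; auto.
      + destruct (HW V (l1 V (or_introl erefl))) as [W' [SW' EW']].
        exists (W' :: l'). split; [|split].
        * intros V' [<-|Hin]; [exact SW'| exact (m1 _ Hin)].
        * intros V' [<-|Hin]; [apply (proj2 (EW' c Ac)); apply l2; left; reflexivity| exact (m2 _ Hin)].
        * intros c' Ac' Hc' V0 HV0. destruct HV0 as [E0|Hin]; [subst V0|].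
          -- apply (proj1 (EW' c' Ac')). apply Hc'. left; auto.
          -- apply m3; auto. intros; apply Hc'; right; auto. }
  exists (A :: l'). split; [|split].
  - intros V' [<-|Hin]; [exact HA| exact (m1 _ Hin)].
  - intros V' [<-|Hin]; [exact Ac| exact (m2 _ Hin)].
  - intros c' Hc'. have Ac' : A c' by apply Hc'; left; auto.
    split; auto. apply l3. apply m3; auto. intros; apply Hc'; right; auto.
Qed.

Lemma open_gen (T U : Type) (ST : pset (pset T)) (SU : pset (pset U)) (A : pset T) (f : T -> U)
  (Dom : pset U) (R : U -> T -> Prop) :
  SU Dom -> (forall a, A a -> Dom (f a)) ->
  (forall u, Dom u -> exists t, A t /\ f t = u /\ R u t) ->
  (forall a V', A a -> ST V' -> V' a -> exists W, SU W /\ W (f a) /\ forall u t, Dom u -> W u -> R u t -> V' t) ->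
  forall V, (forall a, V a -> A a) -> rel_open (gen_open ST) A V -> rel_open (gen_open SU) (img f A) (img f V).
Proof.
  intros HD HfD Hlift Hkey V HVA [U0 [HU0 EV]].
  exists (img f V). split.
  - intros u [a [Va ->]].
    have [Ua Aa] := proj1 (EV a) Va.
    destruct (HU0 a Ua) as [l [l1 [l2 l3]]].
    have [l' [m1 [m2 m3]]] : exists l', (forall W, In W l' -> SU W) /\ (forall W, In W l' -> W (f a)) /\
      (forall u t, Dom u -> R u t -> (forall W, In W l' -> W u) -> forall V', In V' l -> V' t).
    { clear l3. induction l as [|V' l IH].
      - exists nil. simpl. split; [tauto|]. split; [tauto|]. intros; tauto.
      - destruct IH as [l' [m1 [m2 m3]]].
        + intros; apply l1; right; auto.
        + intros; apply l2; right; auto.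
        + destruct (Hkey a V' Aa (l1 V' (or_introl erefl)) (l2 V' (or_introl erefl))) as [W [SW [Wa EW]]].
          exists (W :: l'). split; [|split].
          * intros W0 [<-|Hin]; [exact SW| exact (m1 _ Hin)].
          * intros W0 [<-|Hin]; [exact Wa| exact (m2 _ Hin)].
          * intros u t Du Rt Hu V0 HV0. destruct HV0 as [E0|Hin]; [subst V0|].
            -- apply (EW u t); auto. apply Hu; left; auto.
            -- apply (m3 u t); auto. intros; apply Hu; right; auto. }
    exists (Dom :: l'). split; [|split].
    + intros W [<-|Hin]; [exact HD| exact (m1 _ Hin)].
    + intros W [<-|Hin]; [exact (HfD a Aa)| exact (m2 _ Hin)].
    + intros u' Hu'. have Du' : Dom u' by apply Hu'; left; auto.
      destruct (Hlift u' Du') as [t [At [ft Rt]]].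
      exists t. split; auto. apply EV. split; auto. apply l3. apply (m3 u' t); auto.
      intros; apply Hu'; right; auto.
  - intros u. split; [intro H; split; auto|intros [H _]; auto].
    destruct H as [a [Va ->]]. exists a. auto.
Qed.


Definition SX : pset (pset kp) := fun V => exists F, in_SL F /\ (V = DF F \/ V = Defs.setC (DF F)).
Definition SG : pset (pset germ) := fun V => exists F, in_SL F /\ (V = Psi F \/ V = Defs.setC (Psi F)).
Definition pol (T : Type) (b : bool) (A : pset T) : pset T := if b then A else Defs.setC A.

Lemma SX_pol H b : in_SL H -> SX (pol b (DF H)).
Proof. intro HH. exists H. split; auto. destruct b; simpl; auto. Qed.

Lemma Psi_of F (c : germ) (x : kp) : is_germ_of c F x -> Psi F c.
Proof. intro H. exists x. split; auto. exact (proj2 (proj1 H)). Qed.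

Lemma Psi_DF K F (t : germ) (u : kp) : Psi K t -> is_germ_of t F u -> DF K u.
Proof. intros [u' [Du Ht]] Hu. destruct (is_germ_eq Hu Ht) as [-> _]. exact Du. Qed.

Lemma single_DF v (u : kp) : DF (single v) u <-> kp_map u Z (dg v) = Some v.
Proof.
  split.
  - intros [r [-> H]]. exact H.
  - intro H. exists (v, v). split; auto. reflexivity.
Qed.

Lemma s_key F (a : germ) (x : kp) V' : in_SL F -> is_germ_of a F x -> SG V' -> V' a ->
  exists H b, in_SL H /\ pol b (DF H) x /\
    forall u t, DF F u -> pol b (DF H) u -> is_germ_of t F u -> V' t.
Proof.
  intros HF Ha [K [HK [-> | ->]]] Va.
  - destruct Va as [x' [Dx' Ha']]. destruct (is_germ_eq Ha Ha') as [-> AK].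
    have AK' := AK.
    destruct AK' as [p [q [N [al [be [Fp [Kq [Hp [Hq [A [B E]]]]]]]]]]].
    have X := kp_cmp Hp A. have Y := kp_cmp Hq B. rewrite X in Y. injection Y; intro Ev.
    exists (single (cmp p.2 al)), true. split; [apply single_SL|]. split.
    + simpl. apply single_DF. rewrite (dg0 X). exact X.
    + simpl. intros u t Du Hu Ht.
      apply single_DF in Hu. rewrite (dg0 X) in Hu.
      have Ra := rg_seg Hp A. have Rb := rg_seg Hq B.
      destruct (PC Hu (esym Ra)) as [U1 U2].
      rewrite Ev in Hu. destruct (PC Hu (esym Rb)) as [U3 U4].

      have VK : valid K u := conj HK (ex_intro _ q (conj Kq U3)).
      apply (Psi_of (x:=u)). apply (is_germ_transfer Ht VK).
      exists p, q, N, al, be. tauto.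
  - destruct (classic (DF K x)) as [[q [Kq Hq]] | nD].
    + destruct (proj2 (proj1 Ha)) as [p [Fp Hp]].
      destruct (pre2 Hp Hq) as [e [He HJ]].
      have He0 := He. destruct He0 as [E1 [E2 [E3 E4]]].
      exists (single (cmp p.2 e.1)), true. split; [apply single_SL|]. split.
      * simpl. apply single_DF. rewrite (dg0 HJ). exact HJ.
      * simpl. intros u t Du Hu Ht Pt. apply Va.
        apply single_DF in Hu. rewrite (dg0 HJ) in Hu.
        destruct (PC Hu E1) as [U1 U2].
        have Hu' := Hu. rewrite E3 in Hu'. destruct (PC Hu' E2) as [U3 U4].

        destruct Pt as [u' [Du' Ht']]. destruct (is_germ_eq Ht Ht') as [-> AK].
        have Eq := agree_any HF HK AK Fp Kq U1 U3 U2 U4.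
        have S1 := seg_of Hp HJ E1. have HJ' := HJ. rewrite E3 in HJ'. have S2 := seg_of Hq HJ' E2.
        have VK : valid K x := conj HK (ex_intro _ q (conj Kq Hq)).
        apply (Psi_of (x:=x)). apply (is_germ_transfer Ha VK).
        exists p, q, (joinv (dg p.2) (dg q.2)), e.1, e.2. tauto.
    + exists K, false. split; auto. split; [exact nD|].
      simpl. intros u t Du nDu Ht Pt. apply nDu. exact (Psi_DF Pt Ht).
Qed.

Lemma DF_transport H G (y : kp) : in_SL H -> in_SL G -> DF G y -> (DF (smul H G) y <-> DF H (theta G y)).
Proof.
  intros HH HG Dy. split.
  - intro D. exact (proj2 (T2_out HH HG D)).
  - intro D. exact (T2_in HH HG Dy D).
Qed.

Lemma theta_back F (x : kp) : valid F x -> theta (sstar F) (theta F x) = x.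
Proof. intros [HF [p [Fp Hp]]]. exact (proj2 (theta_inv HF Fp Hp)). Qed.

Lemma valid_back F (u : kp) : in_SL F -> DF (sstar F) u -> valid F (theta (sstar F) u) /\
   theta F (theta (sstar F) u) = u.
Proof.
  intros HF Du. have VS : valid (sstar F) u := conj (sstar_SL HF) Du.
  have V := valid_star VS. rewrite sstar_sstar in V. split; auto.
  have := theta_back VS. rewrite sstar_sstar. auto.
Qed.

Lemma r_key F (a : germ) (x : kp) V' : finitely_aligned L -> in_SL F -> is_germ_of a F x -> SG V' -> V' a ->
  exists W, SX W /\ W (theta F x) /\
    forall u t, DF (sstar F) u -> W u -> is_germ_of t F (theta (sstar F) u) -> V' t.
Proof.
  intros HL HF Ha SV Va.
  destruct (s_key HF Ha SV Va) as [H [b [HH [Wx Hk]]]].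
  have HS := sstar_SL HF.
  have HHS := smul_SL HL HH HS.
  have Vx := proj1 Ha.
  have Dy : DF (sstar F) (theta F x) := proj2 (valid_star Vx).
  have Tr : forall u, DF (sstar F) u -> (pol b (DF (smul H (sstar F))) u <-> pol b (DF H) (theta (sstar F) u)).
  { intros u Du. have := DF_transport HH HS Du. destruct b; simpl; unfold Defs.setC; tauto. }
  exists (pol b (DF (smul H (sstar F)))). split; [apply SX_pol; auto|]. split.
  - apply (proj2 (Tr _ Dy)). rewrite theta_back; auto.
  - intros u t Du Wu Ht. destruct (valid_back HF Du) as [Vu _].
    apply (Hk (theta (sstar F) u) t); auto. exact (proj2 Vu). apply (proj1 (Tr _ Du)). exact Wu.
Qed.

Definition ev (i : 'I_k) (a : nat) : V := fun j => if j == i then a else 0.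

Lemma le_inf_ev d i a : le_inf (ev i a) d <-> match d i with Some b => is_true (a <= b) | None => True end.
Proof.
  split.
  - intro H. have := H i. rewrite /ev /= eqxx. auto.
  - intros H j. rewrite /ev /=. case: (eqVneq j i) => [->|ne]. auto.
    destruct (d j); auto.
Qed.

Lemma deg_eq (x y : kp) : (forall n, kp_map x Z n = kp_map y Z n) -> kp_deg x = kp_deg y.
Proof.
  intro H.
  have Hi : forall n, le_inf n (kp_deg x) <-> le_inf n (kp_deg y).
  { intro n. have A := kp_dom x Z n. have B := kp_dom y Z n. rewrite H in A.
    split; intro h; [apply B; apply A| apply A; apply B]; (split; [apply lev0| exact h]). }
  vext. rename x0 into i.
  have E := fun a => Hi (ev i a). 
  destruct (kp_deg x i) as [b|] eqn:Ex; destruct (kp_deg y i) as [c|] eqn:Ey; auto.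
  - have E1 := E b. rewrite !le_inf_ev Ex Ey in E1.
    have E2 := E b.+1. rewrite !le_inf_ev Ex Ey in E2.
    have : b <= c by apply E1; auto.
    have : ~ (b.+1 <= c) by intro h; have := proj2 E2 h; lia.
    intros; f_equal; lia.
  - have E2 := E b.+1. rewrite !le_inf_ev Ex Ey in E2. exfalso. have := proj2 E2 I. lia.
  - have E2 := E c.+1. rewrite !le_inf_ev Ex Ey in E2. exfalso. have := proj1 E2 I. lia.
Qed.

Lemma sep (x y : kp) : x <> y -> exists n v,
  (kp_map x Z n = Some v /\ kp_map y Z n <> Some v) \/ (kp_map y Z n = Some v /\ kp_map x Z n <> Some v).
Proof.
  intro Hne. apply NNPP. intro Hn. apply Hne.
  have E : forall n, kp_map x Z n = kp_map y Z n.
  { intro n. destruct (kp_map x Z n) as [v|] eqn:Ex.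
    - destruct (classic (kp_map y Z n = Some v)) as [h|h]; auto.
      exfalso. apply Hn. exists n, v. left. auto.
    - destruct (kp_map y Z n) as [v|] eqn:Ey; auto.
      exfalso. apply Hn. exists n, v. right. split; auto. rewrite Ex. discriminate. }
  apply (path_eq_from (d0 := Z)).
  - apply deg_eq; auto.
  - intro i. destruct (kp_deg x i); rewrite /zerov //.
  - intros; auto.
Qed.


Lemma SG_Psi K : in_SL K -> SG (Psi K).
Proof. intro H. exists K. auto. Qed.
Lemma SG_PsiC K : in_SL K -> SG (Defs.setC (Psi K)).
Proof. intro H. exists K. auto. Qed.

Lemma in_Gop_Psi (F : pset (M * M)) : finitely_aligned L -> in_SL F -> in_Gop (Psi F).
Proof.
  intros HL HF.
  have GO : forall V, SG V -> G_open V := fun V H => gen_open_sub H.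
  split; [|split; [|split]].
  - apply GO. apply SG_Psi; auto.
  - intros a b [x [Dx Ha]] [y [Dy Hb]] Hne.
    have Hxy : x <> y by intros ->; apply Hne; exact (germ_uniq Ha Hb).
    destruct (sep Hxy) as [n [v Hv]].
    set K := smul F (QH (single v)).
    have HK : in_SL K := smul_SL HL HF (QH_SL (single_SL v)).
    have Ra : Psi K a <-> DF (single v) x := restrict_Psi HL (single_SL v) Ha.
    have Rb : Psi K b <-> DF (single v) y := restrict_Psi HL (single_SL v) Hb.
    rewrite !single_DF in Ra Rb.
    destruct Hv as [[X1 X2] | [X1 X2]].
    + exists (Psi K), (Defs.setC (Psi K)). split; [apply GO; apply SG_Psi; auto|].
      split; [apply GO; apply SG_PsiC; auto|].
      split; [apply Ra; rewrite (dg0 X1); exact X1|].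
      split; [intro Pb; apply X2; rewrite -(dg0 X1); apply Rb; exact Pb|].
      intros c _ h1 h2. exact (h2 h1).
    + exists (Defs.setC (Psi K)), (Psi K). split; [apply GO; apply SG_PsiC; auto|].
      split; [apply GO; apply SG_Psi; auto|].
      split; [intro Pa; apply X2; rewrite -(dg0 X1); apply Ra; exact Pa|].
      split; [apply Rb; rewrite (dg0 X1); exact X1|].
      intros c _ h1 h2. exact (h1 h2).
  - split; [|split].
    + intros a b [x [Dx Ha]] [y [Dy Hb]] E.
      rewrite (germ_r_val Ha) (germ_r_val Hb) in E.
      have : x = y by rewrite -(theta_back (proj1 Ha)) -(theta_back (proj1 Hb)) E.
      intros ->. exact (germ_uniq Ha Hb).
    + intros W HW. exists (fun c => Psi F c /\ W (germ_r c)). split.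
      * apply (cont_gen (ST := SG) (SU := SX)); auto. apply SG_Psi; auto.
        intros W0 [H [HH EW]].
        have HHF := smul_SL HL HH HF.
        have HK := smul_SL HL HF (QH_SL HHF).
        have Eq : forall c, Psi F c -> (Psi (smul F (QH (smul H F))) c <-> DF H (germ_r c)).
        { intros c [x [Dx Hc]]. rewrite (restrict_Psi HL HHF Hc) (germ_r_val Hc).
          exact (DF_transport HH HF Dx). }
        destruct EW as [-> | ->].
        -- exists (Psi (smul F (QH (smul H F)))). split; [apply SG_Psi; auto|]. exact Eq.
        -- exists (Defs.setC (Psi (smul F (QH (smul H F))))). split; [apply SG_PsiC; auto|].
           intros c Pc. unfold Defs.setC. have := Eq c Pc. tauto.
      * intro c. tauto.
    + intros V HVA HV.
      apply (open_gen (ST := SG) (SU := SX) (Dom := DF (sstar F))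
               (R := fun u t => is_germ_of t F (theta (sstar F) u))); auto.
      * exists (sstar F). split; [apply sstar_SL; auto| left; reflexivity].
      * intros a [x [Dx Ha]]. rewrite (germ_r_val Ha). exact (proj2 (valid_star (proj1 Ha))).
      * intros u Du. destruct (valid_back HF Du) as [Vu Eu].
        exists (mkg Vu). split; [apply Psi_mkg|]. split; [|apply is_germ_mkg].
        rewrite (germ_r_val (is_germ_mkg Vu)). exact Eu.
      * intros a V' [x [Dx Ha]] SV Va. rewrite (germ_r_val Ha). exact (r_key HL HF Ha SV Va).
  - split; [|split].
    + intros a b [x [Dx Ha]] [y [Dy Hb]] E.
      rewrite (germ_s_val Ha) (germ_s_val Hb) in E. subst y. exact (germ_uniq Ha Hb).
    + intros W HW. exists (fun c => Psi F c /\ W (germ_s c)). split.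
      * apply (cont_gen (ST := SG) (SU := SX)); auto. apply SG_Psi; auto.
        intros W0 [H [HH EW]].
        have HK := smul_SL HL HF (QH_SL HH).
        have Eq : forall c, Psi F c -> (Psi (smul F (QH H)) c <-> DF H (germ_s c)).
        { intros c [x [Dx Hc]]. rewrite (restrict_Psi HL HH Hc) (germ_s_val Hc). tauto. }
        destruct EW as [-> | ->].
        -- exists (Psi (smul F (QH H))). split; [apply SG_Psi; auto|]. exact Eq.
        -- exists (Defs.setC (Psi (smul F (QH H)))). split; [apply SG_PsiC; auto|].
           intros c Pc. unfold Defs.setC. have := Eq c Pc. tauto.
      * intro c. tauto.
    + intros V HVA HV.
      apply (open_gen (ST := SG) (SU := SX) (Dom := DF F) (R := fun u t => is_germ_of t F u)); auto.
      * exists F. split; [auto| left; reflexivity].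
      * intros a [x [Dx Ha]]. rewrite (germ_s_val Ha). exact Dx.
      * intros u Du. have Vu : valid F u := conj HF Du.
        exists (mkg Vu). split; [apply Psi_mkg|]. split; [|apply is_germ_mkg].
        exact (germ_s_val (is_germ_mkg Vu)).
      * intros a V' [x [Dx Ha]] SV Va. rewrite (germ_s_val Ha).
        destruct (s_key HF Ha SV Va) as [H [b [HH [Wx Hk]]]].
        exists (pol b (DF H)). split; [apply SX_pol; auto|]. split; auto.
Qed.

End S.

Theorem proposition6p7 (k : nat) (L : kgraph k) (HL : finitely_aligned L) :
  (forall F : pset (Mor L * Mor L), in_SL F -> in_Gop (Psi F)) /\
  (forall F G : pset (Mor L * Mor L), in_SL F -> in_SL G ->
     Psi (smul F G) = gop_mul (Psi F) (Psi G)) /\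
  (forall F : pset (Mor L * Mor L), in_SL F -> Psi (sstar F) = gop_inv (Psi F)) /\
  (forall F G : pset (Mor L * Mor L), in_SL F -> in_SL G -> Psi F = Psi G -> F = G).
Proof.
  split; [|split; [|split]].
  - intros F HF. exact (in_Gop_Psi HL HF).
  - intros F G HF HG. exact (clause_mul HL HF HG).
  - intros F HF. exact (clause_inv HF).
  - intros F G HF HG E. apply pset_ext. intro p. split.
    + apply (clause_inj_half HF HG E).
    + apply (clause_inj_half HG HF (esym E)).
Qed.
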